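(* The forgetful functor $U:\mathbf{Exp}\to\omega\mathbf{Cat}$ is monadic.
   Context: All $\omega$-categories are strict and globular; $\omega\mathbf{Cat}$ is the category of strict $\omega$-categories and strict $\omega$-functors. For an $n$-cell $x$ and $i\le n$, $s_i(x),t_i(x)$ are its iterated $i$-dimensional source and target ($s_n(x)=t_n(x)=x$, $s(x)=s_{n-1}(x)$, $t(x)=t_{n-1}(x)$). $y\star_p x$ is the $p$-composite (defined when $t_p(x)=s_p(y)$), $1_u$ the identity on $u$; lower-dimensional cells in composites stand for their iterated identities; composites are bracketed giving priority to the lowest-dimensional composition ($z\star_p y\star_q x=(z\star_p y)\star_q x$ if $p\le q$, $z\star_p(y\star_q x)$ if $p\ge q$). An expansion on an $\omega$-category $C$ consists of a $0$-cell $o$ (the origin) and, for each $n$-cell $x$ of $C$, an $(n+1)$-cell $\xi_x$ with $\xi_x:o\to x$ if $n=0$ and $\xi_x:\xi_{t(x)}\to x\star_0\xi_{s_0(x)}\star_1\cdots\star_{n-1}\xi_{s_{n-1}(x)}$ if $n>0$, such that for all $n>p$, all $n$-cells $x,y$ with $t_p(x)=s_p(y)$ and all cells $u$: $\xi_{y\star_p x}=t_{p+1}(y)\star_0\xi_{s_0(x)}\star_1\cdots\star_{p-1}\xi_{s_{p-1}(x)}\star_p\xi_x\star_{p+1}\xi_y$, $\xi_{1_u}=1_{\xi_u}$, $\xi_{\xi_u}=1_{\xi_u}$, and $\xi_o=1_o$. $\mathbf{Exp}$ is the category whose objects are $\omega$-categories with an expansion $(C,o,\xi)$ and whose morphisms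 are $\omega$-functors $f$ with $f(o)=o$ and $f(\xi_x)=\xi_{f(x)}$ for every cell $x$; $U$ forgets the expansion. *)

(* Defs.v *)
From Stdlib Require Import Arith PeanoNat List Lia.
From Stdlib Require Import ProofIrrelevance FunctionalExtensionality.

Set Implicit Arguments.
Unset Strict Implicit.

(* The cells of all dimensions are gathered in a single
   carrier type, each cell carrying its dimension [dim]; the n-cells are
   the cells of dimension n.  [src]/[tgt] are the (n-1)-dimensional source
   and target (on 0-cells they are fixed to the identity, a harmless
   normalisation of otherwise meaningless values), [idc u] is the identity
   (n+1)-cell on an n-cell u, and [comp p y x] is the p-composite
   y *_p x (only meaningful when x,y are composable, see below). *)
Record GlobData := {
  cell :> Type;
  dim : cell -> nat;
  src : cell -> cell;
  tgt : cell -> cell;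
  idc : cell -> cell;
  comp : nat -> cell -> cell -> cell }.

Arguments dim {g} _.
Arguments src {g} _.
Arguments tgt {g} _.
Arguments idc {g} _.
Arguments comp {g} _ _ _.

Section Derived.
Variable G : GlobData.

(* iterated i-dimensional source / target s_i(x), t_i(x)  (= x if i >= dim x) *)
Definition srcn (i : nat) (x : G) : G := Nat.iter (dim x - i) (@src G) x.
Definition tgtn (i : nat) (x : G) : G := Nat.iter (dim x - i) (@tgt G) x.

Definition idn (n : nat) (u : G) : G := Nat.iter (n - dim u) (@idc G) u.

Definition composable (p : nat) (x y : G) : Prop :=
  p < dim x /\ dim y = dim x /\ tgtn p x = srcn p y.

(* composite where lower-dimensional cells stand for their iterated identities *)
Definition pcomp (p : nat) (y x : G) : G :=
  let m := Nat.max (dim x) (dim y) in comp p (idn m y) (idn m x).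

Record is_omega_cat : Prop := {
  oc_dim_src : forall x : G, 0 < dim x -> dim (src x) = pred (dim x);
  oc_dim_tgt : forall x : G, 0 < dim x -> dim (tgt x) = pred (dim x);
  oc_st0 : forall x : G, dim x = 0 -> src x = x /\ tgt x = x;
  oc_dim_id : forall u : G, dim (idc u) = S (dim u);
  oc_dim_comp : forall p (x y : G), composable p x y -> dim (comp p y x) = dim x;
  oc_glob : forall x : G, 1 < dim x ->
      src (src x) = src (tgt x) /\ tgt (src x) = tgt (tgt x);
  oc_st_id : forall u : G, src (idc u) = u /\ tgt (idc u) = u;
  oc_st_comp_top : forall p (x y : G), composable p x y -> S p = dim x ->
      src (comp p y x) = src x /\ tgt (comp p y x) = tgt y;
  oc_st_comp_low : forall p (x y : G), composable p x y -> S p < dim x ->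
      src (comp p y x) = comp p (src y) (src x) /\
      tgt (comp p y x) = comp p (tgt y) (tgt x);
  oc_assoc : forall p (x y z : G), composable p x y -> composable p y z ->
      comp p (comp p z y) x = comp p z (comp p y x);
  oc_unit_l : forall p (x : G), p < dim x ->
      comp p (idn (dim x) (tgtn p x)) x = x;
  oc_unit_r : forall p (x : G), p < dim x ->
      comp p x (idn (dim x) (srcn p x)) = x;
  oc_id_comp : forall p (x y : G), composable p x y ->
      idc (comp p y x) = comp p (idc y) (idc x);
  oc_interchange : forall p q (x y x' y' : G), q < p ->
      composable p x y -> composable p x' y' ->
      composable q x x' -> composable q y y' ->
      comp q (comp p y' x') (comp p y x) = comp p (comp q y' y) (comp q x' x) }.

(* x *_0 xi_{s_0 x'} *_1 ... *_{k-1} xi_{s_{k-1} x'}  starting from [base],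
   bracketed to the left (lowest-dimensional composition first) *)
Definition chain (xi : G -> G) (base x : G) (k : nat) : G :=
  fold_left (fun acc i => pcomp i acc (xi (srcn i x))) (seq 0 k) base.

Record is_expansion (o : G) (xi : G -> G) : Prop := {
  ex_dim_o : dim o = 0;
  ex_dim : forall x : G, dim (xi x) = S (dim x);
  ex_st0 : forall x : G, dim x = 0 -> src (xi x) = o /\ tgt (xi x) = x;
  ex_stS : forall x : G, 0 < dim x ->
      src (xi x) = xi (tgt x) /\ tgt (xi x) = chain xi x x (dim x);
  ex_comp : forall p (x y : G), composable p x y ->
      xi (comp p y x) =
      pcomp (S p) (pcomp p (chain xi (tgtn (S p) y) x p) (xi x)) (xi y);
  ex_id : forall u : G, xi (idc u) = idc (xi u);
  ex_xi : forall u : G, xi (xi u) = idc (xi u);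
  ex_o : xi o = idc o }.

End Derived.

Record OmegaCat := { ocdata :> GlobData; ocax : is_omega_cat ocdata }.

Definition is_omega_functor (C D : GlobData) (f : C -> D) : Prop :=
  (forall x, dim (f x) = dim x) /\
  (forall x, f (src x) = src (f x)) /\
  (forall x, f (tgt x) = tgt (f x)) /\
  (forall u, f (idc u) = idc (f u)) /\
  (forall p x y, composable p x y -> f (comp p y x) = comp p (f y) (f x)).

Record ofun (C D : OmegaCat) := { ofn :> C -> D; ofn_ax : is_omega_functor ofn }.

Record ExpCat := {
  ecat :> OmegaCat;
  origin : ecat;
  xi : ecat -> ecat;
  expax : is_expansion origin xi }.

Arguments origin : clear implicits.
Arguments xi : clear implicits.

Record efun (C D : ExpCat) := {
  efn :> ofun C D;
  efn_o : efn (origin C) = origin D;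
  efn_xi : forall x, efn (xi C x) = xi D (efn x) }.

Record Category := {
  ob :> Type;
  hom : ob -> ob -> Type;
  cid : forall a, hom a a;
  cmp : forall a b c, hom b c -> hom a b -> hom a c;
  cmp_id_l : forall a b (f : hom a b), cmp (cid b) f = f;
  cmp_id_r : forall a b (f : hom a b), cmp f (cid a) = f;
  cmp_assoc : forall a b c d (f : hom a b) (g : hom b c) (h : hom c d),
      cmp h (cmp g f) = cmp (cmp h g) f }.

Arguments hom {_} _ _.
Arguments cid {_} _.
Arguments cmp {_ _ _ _} _ _.

Record Functor (C D : Category) := {
  fobj : C -> D;
  fmap : forall a b, hom a b -> hom (fobj a) (fobj b);
  fmap_id : forall a, fmap (cid a) = cid (fobj a);
  fmap_cmp : forall a b c (f : hom a b) (g : hom b c),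
      fmap (cmp g f) = cmp (fmap g) (fmap f) }.

Arguments fobj {C D} _ _.
Arguments fmap {C D} _ {a b} _.

Section Monadic.
Variables (C D : Category) (U : Functor D C).

Record Adjunction (F : Functor C D) := {
  adj_unit : forall c : C, hom c (fobj U (fobj F c));
  adj_counit : forall d : D, hom (fobj F (fobj U d)) d;
  adj_unit_nat : forall c c' (g : hom c c'),
      cmp (fmap U (fmap F g)) (adj_unit c) = cmp (adj_unit c') g;
  adj_counit_nat : forall d d' (h : hom d d'),
      cmp h (adj_counit d) = cmp (adj_counit d') (fmap F (fmap U h));
  adj_tri1 : forall c, cmp (adj_counit (fobj F c)) (fmap F (adj_unit c)) = cid (fobj F c);
  adj_tri2 : forall d, cmp (fmap U (adj_counit d)) (adj_unit (fobj U d)) = cid (fobj U d) }.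

Variables (F : Functor C D) (adj : Adjunction F).

(* Eilenberg–Moore algebras of the monad T = UF, with mu = U eps F *)
Definition is_algebra (A : C) (a : hom (fobj U (fobj F A)) A) : Prop :=
  cmp a (adj_unit adj A) = cid A /\
  cmp a (fmap U (fmap F a)) = cmp a (fmap U (adj_counit adj (fobj F A))).

Definition is_alg_hom (A B : C) (a : hom (fobj U (fobj F A)) A)
    (b : hom (fobj U (fobj F B)) B) (h : hom A B) : Prop :=
  cmp b (fmap U (fmap F h)) = cmp h a.

(* the comparison functor K : D -> C^T, d |-> (U d, U eps_d), f |-> U f,
   is fully faithful and essentially surjective *)
Definition comparison_equivalence : Prop :=
  (forall d d' (f g : hom d d'), fmap U f = fmap U g -> f = g) /\
  (forall d d' (g : hom (fobj U d) (fobj U d')),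
      is_alg_hom (fmap U (adj_counit adj d)) (fmap U (adj_counit adj d')) g ->
      exists f : hom d d', fmap U f = g) /\
  (forall (A : C) (a : hom (fobj U (fobj F A)) A), is_algebra a ->
      exists (d : D) (h : hom (fobj U d) A) (h' : hom A (fobj U d)),
        cmp h h' = cid A /\ cmp h' h = cid (fobj U d) /\
        is_alg_hom (fmap U (adj_counit adj d)) a h /\
        is_alg_hom a (fmap U (adj_counit adj d)) h').

End Monadic.

Definition monadic (C D : Category) (U : Functor D C) : Prop :=
  exists (F : Functor C D) (adj : Adjunction U F), comparison_equivalence adj.

Lemma ofun_eq (C D : OmegaCat) (f g : ofun C D) : (forall x, f x = g x) -> f = g.
Proof.
  destruct f as [f pf], g as [g pg]; simpl; intro H.
  assert (f = g) by (apply functional_extensionality; exact H); subst g.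
  f_equal; apply proof_irrelevance.
Qed.

Lemma iter_comm (A B : Type) (f : A -> B) (s : A -> A) (s' : B -> B) :
  (forall x, f (s x) = s' (f x)) -> forall k x, f (Nat.iter k s x) = Nat.iter k s' (f x).
Proof. intros H k; induction k; intro x; simpl; [reflexivity| rewrite H, IHk; reflexivity]. Qed.

Lemma functor_composable (C D : GlobData) (f : C -> D) :
  is_omega_functor f -> forall p x y, composable p x y -> composable p (f x) (f y).
Proof.
  intros [Hd [Hs [Ht _]]] p x y [H1 [H2 H3]]; unfold composable, srcn, tgtn in *.
  rewrite !Hd; repeat split; auto.
  rewrite <- (iter_comm Hs), <- (iter_comm Ht), H3; reflexivity.
Qed.

Definition ofun_id (C : OmegaCat) : ofun C C.
Proof.
  refine {| ofn := fun x => x |}.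
  repeat split; auto.
Defined.

Definition ofun_comp (A B C : OmegaCat) (g : ofun B C) (f : ofun A B) : ofun A C.
Proof.
  refine {| ofn := fun x => g (f x) |}.
  destruct f as [f pf], g as [g pg]; simpl.
  pose proof (functor_composable pf) as cf.
  destruct pf as [fd [fs [ft [fi fc]]]], pg as [gd [gs [gt [gi gc]]]].
  repeat split; intros.
  - rewrite gd, fd; auto.
  - rewrite fs, gs; auto.
  - rewrite ft, gt; auto.
  - rewrite fi, gi; auto.
  - rewrite fc, gc; auto.
Defined.

Definition OmegaCatC : Category.
Proof.
  refine {| ob := OmegaCat; hom := ofun; cid := ofun_id; cmp := fun a b c g f => ofun_comp g f |};
  intros; apply ofun_eq; reflexivity.
Defined.

Lemma efun_eq (C D : ExpCat) (f g : efun C D) : efn f = efn g -> f = g.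
Proof.
  destruct f as [f f1 f2], g as [g g1 g2]; simpl; intro H; subst g.
  f_equal; apply proof_irrelevance.
Qed.

Definition efun_id (C : ExpCat) : efun C C.
Proof.
  refine {| efn := ofun_id C |}; reflexivity.
Defined.

Definition efun_comp (A B C : ExpCat) (g : efun B C) (f : efun A B) : efun A C.
Proof.
  refine {| efn := ofun_comp g f |}; simpl.
  - rewrite (efn_o f); apply (efn_o g).
  - intro x; rewrite (efn_xi f); apply (efn_xi g).
Defined.

Definition ExpC : Category.
Proof.
  refine {| ob := ExpCat; hom := efun; cid := efun_id; cmp := fun a b c g f => efun_comp g f |};
  intros; apply efun_eq, ofun_eq; reflexivity.
Defined.

Definition ForgetExp : Functor ExpC OmegaCatC.
Proof.
  refine {| fobj := (ecat : ExpC -> OmegaCatC);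
            fmap := fun a b (f : @hom ExpC a b) => (efn f : @hom OmegaCatC (ecat a) (ecat b)) |};
  reflexivity.
Defined.

(* Main.v *)
Require Import Defs.
From Stdlib Require Import Arith PeanoNat List Lia.
From Stdlib Require Import ProofIrrelevance FunctionalExtensionality PropExtensionality ClassicalEpsilon.

Record Pre0 (G : GlobData) : Prop := {
  p0_dim_src : forall x : G, dim (src x) = pred (dim x);
  p0_dim_tgt : forall x : G, dim (tgt x) = pred (dim x);
  p0_glob : forall x : G, 1 < dim x ->
      src (src x) = src (tgt x) /\ tgt (src x) = tgt (tgt x) }.
Arguments p0_dim_src {G}. Arguments p0_dim_tgt {G}. Arguments p0_glob {G}.
Existing Class Pre0.

Record Pre (G : GlobData) : Prop := {
  pr_dim_src : forall x : G, dim (src x) = pred (dim x);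
  pr_dim_tgt : forall x : G, dim (tgt x) = pred (dim x);
  pr_st0 : forall x : G, dim x = 0 -> src x = x /\ tgt x = x;
  pr_dim_id : forall u : G, dim (idc u) = S (dim u);
  pr_dim_comp : forall p (x y : G), composable p x y -> dim (comp p y x) = dim x;
  pr_glob : forall x : G, 1 < dim x ->
      src (src x) = src (tgt x) /\ tgt (src x) = tgt (tgt x);
  pr_st_id : forall u : G, src (idc u) = u /\ tgt (idc u) = u;
  pr_top : forall p (x y : G), composable p x y -> S p = dim x ->
      src (comp p y x) = src x /\ tgt (comp p y x) = tgt y;
  pr_low : forall p (x y : G), composable p x y -> S p < dim x ->
      src (comp p y x) = comp p (src y) (src x) /\
      tgt (comp p y x) = comp p (tgt y) (tgt x) }.
Arguments pr_dim_src {G}. Arguments pr_dim_tgt {G}. Arguments pr_st0 {G}.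
Arguments pr_dim_id {G}. Arguments pr_dim_comp {G}. Arguments pr_glob {G}.
Arguments pr_st_id {G}.
Existing Class Pre. Arguments pr_top {G}. Arguments pr_low {G}.

Section Pre0S.
Context {G : GlobData} {H0 : Pre0 G}.
Lemma srcn_S i (x : G) : i < dim x -> srcn i x = srcn i (src x).
Proof.
  intro; unfold srcn; rewrite (p0_dim_src H0).
  replace (dim x - i) with (S (pred (dim x) - i)) by lia.
  apply Nat.iter_succ_r.
Qed.
Lemma tgtn_S i (x : G) : i < dim x -> tgtn i x = tgtn i (tgt x).
Proof.
  intro; unfold tgtn; rewrite (p0_dim_tgt H0).
  replace (dim x - i) with (S (pred (dim x) - i)) by lia.
  apply Nat.iter_succ_r.
Qed.

Lemma srcn_tgt1 i (x : G) : S i < dim x -> srcn i (tgt x) = srcn i x.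
Proof.
  intro. rewrite (srcn_S i x) by lia. rewrite (srcn_S i (src x)) by (rewrite (p0_dim_src H0); lia).
  rewrite (srcn_S i (tgt x)) by (rewrite (p0_dim_tgt H0); lia).
  destruct (p0_glob H0 x) as [-> _]; [lia|reflexivity].
Qed.
Lemma tgtn_src1 i (x : G) : S i < dim x -> tgtn i (src x) = tgtn i x.
Proof.
  intro. rewrite (tgtn_S i x) by lia. rewrite (tgtn_S i (tgt x)) by (rewrite (p0_dim_tgt H0); lia).
  rewrite (tgtn_S i (src x)) by (rewrite (p0_dim_src H0); lia).
  destruct (p0_glob H0 x) as [_ ->]; [lia|reflexivity].
Qed.

End Pre0S.

#[global] Instance pre_pre0 {G : GlobData} {H : Pre G} : Pre0 G :=
  {| p0_dim_src := pr_dim_src H; p0_dim_tgt := pr_dim_tgt H; p0_glob := pr_glob H |}.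

Section PreS.
Context {G : GlobData}.

Lemma omega_pre : is_omega_cat G -> Pre G.
Proof.
  intro H; constructor.
  - intro x; destruct (dim x) eqn:E.
    + destruct (oc_st0 H E) as [-> _]; rewrite E; reflexivity.
    + rewrite <- E; apply (oc_dim_src H); lia.
  - intro x; destruct (dim x) eqn:E.
    + destruct (oc_st0 H E) as [_ ->]; rewrite E; reflexivity.
    + rewrite <- E; apply (oc_dim_tgt H); lia.
  - exact (oc_st0 H).
  - exact (oc_dim_id H).
  - exact (oc_dim_comp H).
  - exact (oc_glob H).
  - exact (oc_st_id H).
  - exact (oc_st_comp_top H).
  - exact (oc_st_comp_low H).
Qed.

Context {H : Pre G}.


Lemma dim_iter_src k (x : G) : dim (Nat.iter k src x) = dim x - k.
Proof. induction k; simpl; [lia|]. rewrite (pr_dim_src H), IHk; lia. Qed.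
Lemma dim_iter_tgt k (x : G) : dim (Nat.iter k tgt x) = dim x - k.
Proof. induction k; simpl; [lia|]. rewrite (pr_dim_tgt H), IHk; lia. Qed.
Lemma dim_iter_id k (x : G) : dim (Nat.iter k idc x) = dim x + k.
Proof. induction k; simpl; [lia|]. rewrite (pr_dim_id H), IHk; lia. Qed.

Lemma dim_srcn i (x : G) : dim (srcn i x) = Nat.min i (dim x).
Proof. unfold srcn; rewrite dim_iter_src; lia. Qed.
Lemma dim_tgtn i (x : G) : dim (tgtn i x) = Nat.min i (dim x).
Proof. unfold tgtn; rewrite dim_iter_tgt; lia. Qed.
Lemma dim_idn n (u : G) : dim (idn n u) = Nat.max n (dim u).
Proof. unfold idn; rewrite dim_iter_id; lia. Qed.

Lemma srcn_ge i (x : G) : dim x <= i -> srcn i x = x.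
Proof. intro; unfold srcn; replace (dim x - i) with 0 by lia; reflexivity. Qed.
Lemma tgtn_ge i (x : G) : dim x <= i -> tgtn i x = x.
Proof. intro; unfold tgtn; replace (dim x - i) with 0 by lia; reflexivity. Qed.
Lemma idn_le n (u : G) : n <= dim u -> idn n u = u.
Proof. intro; unfold idn; replace (n - dim u) with 0 by lia; reflexivity. Qed.

Lemma srcn_srcn i j (x : G) : i <= j -> srcn i (srcn j x) = srcn i x.
Proof.
  intro Hij. destruct (Nat.le_gt_cases (dim x) j).
  - rewrite (srcn_ge j x); auto.
  - unfold srcn. rewrite dim_iter_src. rewrite <- Nat.iter_add. f_equal; lia.
Qed.
Lemma tgtn_tgtn i j (x : G) : i <= j -> tgtn i (tgtn j x) = tgtn i x.
Proof.
  intro Hij. destruct (Nat.le_gt_cases (dim x) j).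
  - rewrite (tgtn_ge j x); auto.
  - unfold tgtn. rewrite dim_iter_tgt. rewrite <- Nat.iter_add. f_equal; lia.
Qed.

Lemma srcn_tgtn i j (x : G) : i < j -> srcn i (tgtn j x) = srcn i x.
Proof.
  intro Hij. remember (dim x - j) as k eqn:Ek. revert x Ek.
  induction k; intros x Ek.
  - rewrite tgtn_ge by lia; reflexivity.
  - rewrite (tgtn_S j x) by lia. rewrite IHk by (rewrite (pr_dim_tgt H); lia).
    apply srcn_tgt1; lia.
Qed.
Lemma tgtn_srcn i j (x : G) : i < j -> tgtn i (srcn j x) = tgtn i x.
Proof.
  intro Hij. remember (dim x - j) as k eqn:Ek. revert x Ek.
  induction k; intros x Ek.
  - rewrite srcn_ge by lia; reflexivity.
  - rewrite (srcn_S j x) by lia. rewrite IHk by (rewrite (pr_dim_src H); lia).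
    apply tgtn_src1; lia.
Qed.

Lemma srcn_idc i (u : G) : i <= dim u -> srcn i (idc u) = srcn i u.
Proof. intro; rewrite srcn_S by (rewrite (pr_dim_id H); lia). f_equal; apply H. Qed.
Lemma tgtn_idc i (u : G) : i <= dim u -> tgtn i (idc u) = tgtn i u.
Proof. intro; rewrite tgtn_S by (rewrite (pr_dim_id H); lia). f_equal; apply H. Qed.

Lemma srcn_iter_id i k (u : G) : i <= dim u -> srcn i (Nat.iter k idc u) = srcn i u.
Proof.
  induction k; intro; simpl; auto. rewrite srcn_idc; auto. rewrite dim_iter_id; lia.
Qed.
Lemma tgtn_iter_id i k (u : G) : i <= dim u -> tgtn i (Nat.iter k idc u) = tgtn i u.
Proof.
  induction k; intro; simpl; auto. rewrite tgtn_idc; auto. rewrite dim_iter_id; lia.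
Qed.
Lemma srcn_idn i n (u : G) : i <= dim u -> srcn i (idn n u) = srcn i u.
Proof. apply srcn_iter_id. Qed.
Lemma tgtn_idn i n (u : G) : i <= dim u -> tgtn i (idn n u) = tgtn i u.
Proof. apply tgtn_iter_id. Qed.

Lemma idn_split i n (u : G) : dim u <= i <= n -> idn n u = Nat.iter (n - i) idc (idn i u).
Proof.
  intro. unfold idn. rewrite <- Nat.iter_add. f_equal; lia.
Qed.
Lemma srcn_idn_high i n (u : G) : dim u <= i <= n -> srcn i (idn n u) = idn i u.
Proof.
  intro. rewrite (idn_split i n u) by lia. rewrite srcn_iter_id by (rewrite dim_idn; lia).
  apply srcn_ge. rewrite dim_idn; lia.
Qed.
Lemma tgtn_idn_high i n (u : G) : dim u <= i <= n -> tgtn i (idn n u) = idn i u.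
Proof.
  intro. rewrite (idn_split i n u) by lia. rewrite tgtn_iter_id by (rewrite dim_idn; lia).
  apply tgtn_ge. rewrite dim_idn; lia.
Qed.

Lemma comp_srcn_high p : forall n (x y : G), dim x = n -> composable p x y ->
  forall i, p < i <= n ->
  srcn i (comp p y x) = comp p (srcn i y) (srcn i x) /\
  tgtn i (comp p y x) = comp p (tgtn i y) (tgtn i x) /\
  composable p (srcn i x) (srcn i y) /\ composable p (tgtn i x) (tgtn i y).
Proof.
  induction n; intros x y Hx Hc i Hi; [lia|].
  destruct Hc as [C1 [C2 C3]].
  destruct (Nat.eq_dec i (S n)) as [->|Hne].
  - rewrite !srcn_ge, !tgtn_ge; try lia;
      try (rewrite (pr_dim_comp H); [lia| repeat split; auto]).
    repeat split; auto.
  - assert (Hcs : composable p (src x) (src y)).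
    { repeat split; rewrite ?(pr_dim_src H); try lia.
      rewrite tgtn_src1 by lia. rewrite <- (srcn_S p y) by lia. auto. }
    assert (Hct : composable p (tgt x) (tgt y)).
    { repeat split; rewrite ?(pr_dim_tgt H); try lia.
      rewrite <- (tgtn_S p x) by lia. rewrite srcn_tgt1 by lia. auto. }
    assert (Hcc : composable p x y) by (repeat split; auto).
    destruct (pr_low H p x y Hcc) as [Es Et]; [lia|].
    assert (Hdc : dim (comp p y x) = S n) by (rewrite (pr_dim_comp H); auto).
    rewrite (srcn_S i (comp p y x)), (tgtn_S i (comp p y x)) by lia.
    rewrite Es, Et.
    destruct (IHn (src x) (src y)) with (i := i) as [A1 [_ [A3 _]]];
      [rewrite (pr_dim_src H); lia | auto | lia |].
    destruct (IHn (tgt x) (tgt y)) with (i := i) as [_ [B2 [_ B4]]];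
      [rewrite (pr_dim_tgt H); lia | auto | lia |].
    rewrite A1, B2.
    rewrite <- !srcn_S, <- !tgtn_S by lia. rewrite <- !srcn_S in A3 by lia.
    rewrite <- !tgtn_S in B4 by lia. auto.
Qed.

Lemma comp_srcn_low p (x y : G) : composable p x y -> forall i, i <= p ->
  srcn i (comp p y x) = srcn i x /\ tgtn i (comp p y x) = tgtn i y.
Proof.
  intros Hc i Hi. pose proof Hc as [C1 [C2 C3]].
  destruct (comp_srcn_high p (dim x) x y eq_refl Hc (S p)) as [A1 [A2 [A3 A4]]]; [lia|].
  assert (Hd : dim (comp p y x) = dim x) by (apply H; auto).
  rewrite <- (srcn_srcn i (S p) (comp p y x)), <- (tgtn_tgtn i (S p) (comp p y x)) by lia.
  rewrite A1, A2.
  assert (D1 : dim (srcn (S p) x) = S p) by (rewrite dim_srcn; lia).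
  assert (D2 : dim (tgtn (S p) x) = S p) by (rewrite dim_tgtn; lia).
  destruct (pr_top H p _ _ A3) as [T1 _]; [lia|].
  destruct (pr_top H p _ _ A4) as [_ T2]; [lia|].
  assert (Hc3 : dim (comp p (srcn (S p) y) (srcn (S p) x)) = S p) by (rewrite (pr_dim_comp H); auto).
  assert (Hc4 : dim (comp p (tgtn (S p) y) (tgtn (S p) x)) = S p) by (rewrite (pr_dim_comp H); auto).
  split.
  - rewrite <- (srcn_srcn i p) by lia. rewrite (srcn_S p) by lia. rewrite T1.
    rewrite <- (srcn_S p) by lia. rewrite !srcn_srcn by lia. reflexivity.
  - rewrite <- (tgtn_tgtn i p) by lia. rewrite (tgtn_S p) by lia. rewrite T2.
    rewrite <- (tgtn_S p) by (destruct A4 as [_ [E _]]; lia).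
    rewrite !tgtn_tgtn by lia. reflexivity.
Qed.

End PreS.

Section Derived2.
Context {G : GlobData}.
Context {H : Pre G}.

Lemma cmp_assoc_ok p (x y z : G) : composable p x y -> composable p y z ->
  composable p x (comp p z y) /\ composable p (comp p y x) z.
Proof.
  intros Hxy Hyz. pose proof Hxy as [A1 [A2 A3]]. pose proof Hyz as [B1 [B2 B3]].
  split; repeat split; try rewrite (pr_dim_comp H _ _ _ Hyz); try rewrite (pr_dim_comp H _ _ _ Hxy); try lia.
  - rewrite (proj1 (comp_srcn_low _ _ _ Hyz p (le_n _))); auto.
  - rewrite (proj2 (comp_srcn_low _ _ _ Hxy p (le_n _))); auto.
Qed.

Lemma cmp_unit_ok p (x : G) : p < dim x ->
  composable p x (idn (dim x) (tgtn p x)) /\ composable p (idn (dim x) (srcn p x)) x.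
Proof.
  intro; split; (split; [|split]).
  - auto.
  - rewrite dim_idn, dim_tgtn; lia.
  - rewrite srcn_idn by (rewrite dim_tgtn; lia). rewrite (srcn_ge p (tgtn p x)); auto. rewrite dim_tgtn; lia.
  - rewrite dim_idn, dim_srcn; lia.
  - rewrite dim_idn, dim_srcn; lia.
  - rewrite tgtn_idn by (rewrite dim_srcn; lia). rewrite (tgtn_ge p (srcn p x)); auto. rewrite dim_srcn; lia.
Qed.

Lemma cmp_idc_ok p (x y : G) : composable p x y -> composable p (idc x) (idc y).
Proof.
  intros [A1 [A2 A3]]; repeat split; rewrite ?(pr_dim_id H); try lia.
  rewrite srcn_idc, tgtn_idc by lia; auto.
Qed.

Lemma cmp_interchange_ok p q (x y x' y' : G) : q < p ->
  composable p x y -> composable p x' y' -> composable q x x' -> composable q y y' ->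
  composable q (comp p y x) (comp p y' x') /\ composable p (comp q x' x) (comp q y' y).
Proof.
  intros Hqp C1 C2 C3 C4.
  pose proof C1 as [A1 [A2 A3]]. pose proof C2 as [B1 [B2 B3]].
  pose proof C3 as [D1 [D2 D3]]. pose proof C4 as [E1 [E2 E3]].
  split; repeat split.
  - rewrite (pr_dim_comp H _ _ _ C1); lia.
  - rewrite (pr_dim_comp H _ _ _ C1), (pr_dim_comp H _ _ _ C2); lia.
  - rewrite (proj2 (comp_srcn_low _ _ _ C1 q ltac:(lia))).
    rewrite (proj1 (comp_srcn_low _ _ _ C2 q ltac:(lia))).
    rewrite <- (tgtn_srcn q p y) by lia. rewrite <- A3. rewrite tgtn_tgtn by lia. exact D3.
  - rewrite (pr_dim_comp H _ _ _ C3); lia.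
  - rewrite (pr_dim_comp H _ _ _ C3), (pr_dim_comp H _ _ _ C4); lia.
  - destruct (comp_srcn_high q (dim x) x x' eq_refl C3 p) as [_ [F2 _]]; [lia|].
    destruct (comp_srcn_high q (dim y) y y' eq_refl C4 p) as [F1 _]; [lia|].
    rewrite F1, F2, A3, B3; reflexivity.
Qed.

Lemma chain_S (xi : G -> G) b x k :
  chain xi b x (S k) = pcomp k (chain xi b x k) (xi (srcn k x)).
Proof. unfold chain. rewrite seq_S, fold_left_app. reflexivity. Qed.

Lemma chain_ext (xi : G -> G) b x x' k : (forall i, i < k -> srcn i x = srcn i x') ->
  chain xi b x k = chain xi b x' k.
Proof.
  induction k; intro E; auto. rewrite !chain_S. rewrite IHk by auto. rewrite E by lia. auto.
Qed.

Definition pcompOK p (y x : G) :=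
  composable p (idn (Nat.max (dim x) (dim y)) x) (idn (Nat.max (dim x) (dim y)) y).

Section Chain.
Variables (o : G) (xi : G -> G) (N : nat).
Hypothesis HD : forall x, dim (xi x) = S (dim x).
Hypothesis H0 : forall x, dim x = 0 -> src (xi x) = o /\ tgt (xi x) = x.
Hypothesis HS : forall z, 0 < dim z -> dim z < N ->
  src (xi z) = xi (tgt z) /\ tgt (xi z) = chain xi z z (dim z).

Definition chainOK b x k := forall i, i < k -> pcompOK i (chain xi b x i) (xi (srcn i x)).

Lemma tgt_xi z : dim z < N -> tgt (xi z) = chain xi z z (dim z).
Proof.
  intro. destruct (dim z) eqn:E.
  - simpl. apply H0; auto.
  - rewrite <- E. apply HS; lia.
Qed.

Lemma chain_main k : k <= N -> forall b x, k <= dim b -> k <= dim x ->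
  (forall i, i < k -> srcn i b = srcn i x) ->
  dim (chain xi b x k) = dim b /\ chainOK b x k /\
  (forall j, k <= j <= dim b -> srcn j (chain xi b x k) = chain xi (srcn j b) x k /\
                               tgtn j (chain xi b x k) = chain xi (tgtn j b) x k).
Proof.
  induction k; intros HkN b x Hb Hx Hbx.
  - split; [reflexivity|]. split; [intros i Hi; lia|]. intros; split; reflexivity.
  - destruct (IHk ltac:(lia) b x ltac:(lia) ltac:(lia) ltac:(intros; apply Hbx; lia)) as [Dacc [OK Sacc]].
    set (acc := chain xi b x k) in *.
    set (ksi := xi (srcn k x)).
    assert (Dk : dim ksi = S k) by (unfold ksi; rewrite HD, dim_srcn; lia).
    assert (Hm : Nat.max (dim ksi) (dim acc) = dim b) by lia.
    assert (Eacc : idn (dim b) acc = acc) by (apply idn_le; lia).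
    assert (Tk : tgtn k (idn (dim b) ksi) = chain xi (srcn k x) x k).
    { rewrite tgtn_idn by lia. rewrite tgtn_S by lia. rewrite tgtn_ge
        by (rewrite (pr_dim_tgt H); lia).
      unfold ksi. rewrite tgt_xi by (rewrite dim_srcn; lia).
      rewrite dim_srcn. replace (Nat.min k (dim x)) with k by lia.
      apply chain_ext. intros; apply srcn_srcn; auto; lia. }
    assert (Cok : pcompOK k acc ksi).
    { unfold pcompOK. rewrite Hm, Eacc. repeat split; rewrite ?dim_idn; try lia.
      rewrite Tk. rewrite (proj1 (Sacc k ltac:(lia))). f_equal. symmetry; apply Hbx; lia. }
    assert (Cc : composable k (idn (dim b) ksi) acc).
    { unfold pcompOK in Cok. rewrite Hm, Eacc in Cok. exact Cok. }
    assert (Echain : chain xi b x (S k) = comp k acc (idn (dim b) ksi)).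
    { rewrite chain_S. fold acc ksi. unfold pcomp. rewrite Hm, Eacc. reflexivity. }
    split; [|split].
    + rewrite Echain, (pr_dim_comp H _ _ _ Cc), dim_idn; lia.
    + intros i Hi. destruct (Nat.eq_dec i k) as [->|]; [exact Cok|apply OK; lia].
    + intros j Hj. rewrite Echain.
      destruct (comp_srcn_high k (dim b) (idn (dim b) ksi) acc ltac:(rewrite dim_idn; lia) Cc j) as [F1 [F2 _]]; [lia|].
      rewrite F1, F2.
      destruct (Sacc j ltac:(lia)) as [S1 S2]. fold acc in S1, S2. rewrite S1, S2.
      rewrite srcn_idn_high, tgtn_idn_high by lia.
      rewrite !chain_S. fold ksi. unfold pcomp.
      destruct (IHk ltac:(lia) (srcn j b) x ltac:(rewrite dim_srcn; lia) ltac:(lia)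
        ltac:(intros; rewrite srcn_srcn by lia; apply Hbx; lia)) as [D1 _].
      destruct (IHk ltac:(lia) (tgtn j b) x ltac:(rewrite dim_tgtn; lia) ltac:(lia)
        ltac:(intros; rewrite srcn_tgtn by lia; apply Hbx; lia)) as [D2 _].
      rewrite D1, D2, dim_srcn, dim_tgtn, Dk.
      replace (Nat.max (S k) (Nat.min j (dim b))) with j by lia.
      rewrite (idn_le j (chain xi (srcn j b) x k)) by (rewrite D1, dim_srcn; lia).
      rewrite (idn_le j (chain xi (tgtn j b) x k)) by (rewrite D2, dim_tgtn; lia).
      split; reflexivity.
Qed.

Lemma chain_tgt_low p k : k <= N -> forall b x, k <= dim b -> k <= dim x ->
  (forall i, i < k -> srcn i b = srcn i x) -> p <= k ->
  tgtn p (chain xi b x k) = chain xi (tgtn p b) x p.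
Proof.
  intros HkN b x Hb Hx Hbx Hpk. induction k.
  - assert (p = 0) by lia; subst. reflexivity.
  - destruct (Nat.eq_dec p (S k)) as [->|Hne].
    + apply (chain_main (S k)); auto.
    + destruct (chain_main k ltac:(lia) b x ltac:(lia) ltac:(lia) ltac:(intros; apply Hbx; lia))
        as [Dacc [OK _]].
      destruct (chain_main (S k) HkN b x Hb Hx Hbx) as [_ [OK2 _]].
      pose proof (OK2 k ltac:(lia)) as Cok. unfold pcompOK in Cok.
      rewrite chain_S. unfold pcomp.
      rewrite (idn_le (Nat.max _ _) (chain xi b x k)) in * by (rewrite HD, dim_srcn; lia).
      rewrite (proj2 (comp_srcn_low _ _ _ Cok p ltac:(lia))).
      apply IHk; auto; lia.
Qed.

Lemma srcn_xi_iter k z : dim z < N -> k <= dim z ->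
  Nat.iter k src (xi z) = xi (Nat.iter k tgt z).
Proof.
  intros Hz. induction k; intro Hk; auto.
  simpl. rewrite IHk by lia. apply HS; rewrite dim_iter_tgt; lia.
Qed.

Lemma srcn_xi p z : dim z < N -> p < dim z -> srcn (S p) (xi z) = xi (tgtn p z).
Proof.
  intros. unfold srcn, tgtn. rewrite HD. replace (S (dim z) - S p) with (dim z - p) by lia.
  apply srcn_xi_iter; lia.
Qed.

Definition exOK p (x y : G) :=
  chainOK (tgtn (S p) y) x p /\
  pcompOK p (chain xi (tgtn (S p) y) x p) (xi x) /\
  pcompOK (S p) (pcomp p (chain xi (tgtn (S p) y) x p) (xi x)) (xi y).

Lemma ex_ok p x y : composable p x y -> dim x < N -> exOK p x y.
Proof.
  intros Hc HxN. pose proof Hc as [C1 [C2 C3]].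
  set (n := dim x) in *.
  set (b := tgtn (S p) y).
  assert (Db : dim b = S p) by (unfold b; rewrite dim_tgtn; lia).
  assert (Hbx : forall i, i < p -> srcn i b = srcn i x).
  { intros. unfold b. rewrite srcn_tgtn by lia.
    rewrite <- (srcn_tgtn i p x) by lia. rewrite C3. symmetry; apply srcn_srcn; lia. }
  destruct (chain_main p ltac:(lia) b x ltac:(lia) ltac:(lia) Hbx) as [DK [OKK SK]].
  set (K := chain xi b x p) in *.
  assert (Hxy : forall i, i < p -> srcn i y = srcn i x).
  { intros. rewrite <- Hbx by auto. unfold b. rewrite srcn_tgtn by lia; auto. }
  assert (Cin : pcompOK p K (xi x)).
  { unfold pcompOK. rewrite HD, DK, Db. fold n. replace (Nat.max (S n) (S p)) with (S n) by lia.
    rewrite (idn_le (S n) (xi x)) by (rewrite HD; lia).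
    repeat split; rewrite ?dim_idn, ?HD; try lia.
    rewrite srcn_idn by lia. rewrite (proj1 (SK p ltac:(lia))).
    rewrite tgtn_S by (rewrite HD; lia). rewrite tgt_xi by lia.
    rewrite (chain_tgt_low p n) by (auto; lia).
    unfold b. rewrite srcn_tgtn by lia. rewrite C3. reflexivity. }
  split; [exact OKK|split; [exact Cin|]].
  unfold pcompOK in Cin. rewrite HD, DK, Db in Cin. fold n in Cin.
  replace (Nat.max (S n) (S p)) with (S n) in Cin by lia.
  rewrite (idn_le (S n) (xi x)) in Cin by (rewrite HD; lia).
  unfold pcompOK, pcomp. fold b. fold K. rewrite !HD, DK, Db. fold n.
  replace (Nat.max (S n) (S p)) with (S n) by lia.
  rewrite (idn_le (S n) (xi x)) by (rewrite HD; lia).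
  set (I := comp p (idn (S n) K) (xi x)).
  assert (DI : dim I = S n) by (unfold I; rewrite (pr_dim_comp H _ _ _ Cin), HD; auto).
  rewrite DI, C2. rewrite Nat.max_id.
  rewrite (idn_le (S n) I), (idn_le (S n) (xi y)) by (rewrite ?HD; lia).
  repeat split; rewrite ?HD; try lia.
  rewrite tgtn_S by (rewrite HD; lia). rewrite tgt_xi by lia.
  rewrite (chain_tgt_low (S p) (dim y)) by (auto; lia).
  rewrite chain_S. fold b.
  rewrite (chain_ext xi b y x p) by auto. fold K.
  unfold I.
  destruct (comp_srcn_high p (S n) (xi x) (idn (S n) K) ltac:(rewrite HD; lia) Cin (S p)) as [F1 _]; [lia|].
  rewrite F1. rewrite srcn_idn_high by lia. rewrite srcn_xi by lia.
  rewrite (idn_le (S p) K) by lia.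
  unfold pcomp. rewrite HD, dim_srcn, DK, Db. replace (Nat.max (S (Nat.min p (dim y))) (S p)) with (S p) by lia.
  rewrite (idn_le (S p) K) by lia. rewrite (idn_le (S p) (xi (srcn p y))) by (rewrite HD, dim_srcn; lia).
  rewrite C3. reflexivity.
Qed.

End Chain.
End Derived2.

Section Transport.
Context {GS GT : GlobData}.
Variables (xiS : GS -> GS) (xiT : GT -> GT) (R : GS -> GT -> Prop)
  (Cond : nat -> GS -> GS -> GT -> GT -> Prop).
Hypothesis Rdim : forall a u, R a u -> dim a = dim u.
Hypothesis Rsrc : forall a u, R a u -> R (src a) (src u).
Hypothesis Rtgt : forall a u, R a u -> R (tgt a) (tgt u).
Hypothesis Ridc : forall a u, R a u -> R (idc a) (idc u).
Hypothesis Rxi : forall a u, R a u -> R (xiS a) (xiT u).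
Hypothesis Rcomp : forall p a b u v, R a u -> R b v -> Cond p a b u v ->
  R (comp p b a) (comp p v u).

Definition pcond p (b a : GS) (v u : GT) :=
  Cond p (idn (Nat.max (dim a) (dim b)) a) (idn (Nat.max (dim a) (dim b)) b)
         (idn (Nat.max (dim u) (dim v)) u) (idn (Nat.max (dim u) (dim v)) v).

Lemma R_srcn i a u : R a u -> R (srcn i a) (srcn i u).
Proof.
  intro Hr. unfold srcn. rewrite (Rdim _ _ Hr). generalize (dim u - i) as k.
  induction k; simpl; auto.
Qed.
Lemma R_tgtn i a u : R a u -> R (tgtn i a) (tgtn i u).
Proof.
  intro Hr. unfold tgtn. rewrite (Rdim _ _ Hr). generalize (dim u - i) as k.
  induction k; simpl; auto.
Qed.
Lemma R_idn n a u : R a u -> R (idn n a) (idn n u).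
Proof.
  intro Hr. unfold idn. rewrite (Rdim _ _ Hr). generalize (n - dim u) as k.
  induction k; simpl; auto.
Qed.
Lemma R_pcomp p a b u v : R a u -> R b v -> pcond p b a v u ->
  R (pcomp p b a) (pcomp p v u).
Proof.
  intros Ha Hb Hc. unfold pcomp, pcond in *. rewrite (Rdim _ _ Ha), (Rdim _ _ Hb) in *.
  apply Rcomp; auto; apply R_idn; auto.
Qed.

Lemma R_chain b x v u k : R b v -> R x u ->
  (forall i, i < k -> pcond i (chain xiS b x i) (xiS (srcn i x))
                              (chain xiT v u i) (xiT (srcn i u))) ->
  R (chain xiS b x k) (chain xiT v u k).
Proof.
  intros Hb Hx Hc. induction k; auto.
  rewrite !chain_S. apply R_pcomp; auto. apply Rxi, R_srcn; auto.
Qed.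

Lemma R_exRHS p x y u v : R x u -> R y v ->
  (forall i, i < p -> pcond i (chain xiS (tgtn (S p) y) x i) (xiS (srcn i x))
                              (chain xiT (tgtn (S p) v) u i) (xiT (srcn i u))) ->
  pcond p (chain xiS (tgtn (S p) y) x p) (xiS x) (chain xiT (tgtn (S p) v) u p) (xiT u) ->
  pcond (S p) (pcomp p (chain xiS (tgtn (S p) y) x p) (xiS x)) (xiS y)
              (pcomp p (chain xiT (tgtn (S p) v) u p) (xiT u)) (xiT v) ->
  R (pcomp (S p) (pcomp p (chain xiS (tgtn (S p) y) x p) (xiS x)) (xiS y))
    (pcomp (S p) (pcomp p (chain xiT (tgtn (S p) v) u p) (xiT u)) (xiT v)).
Proof.
  intros Hx Hy C1 C2 C3.
  apply R_pcomp; auto. apply R_pcomp; auto. apply R_chain; auto. apply R_tgtn; auto.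
Qed.

End Transport.

Set Implicit Arguments.

Section Free.
Variable C : OmegaCat.

Inductive term : Type :=
| gen (c : C) | orig | txi (t : term) | tsrc (t : term) | ttgt (t : term) | tid (t : term)
| tcomp (p : nat) (y x : term).

Fixpoint tdim (t : term) : nat :=
  match t with
  | gen c => dim c | orig => 0 | txi t => S (tdim t) | tsrc t => pred (tdim t)
  | ttgt t => pred (tdim t) | tid t => S (tdim t) | tcomp _ _ x => tdim x
  end.

Definition TG : GlobData :=
  {| cell := term; dim := tdim; src := tsrc; tgt := ttgt; idc := tid; comp := tcomp |}.

Notation tsrcn := (@srcn TG).
Notation ttgtn := (@tgtn TG).
Notation tidn := (@idn TG).
Notation tpcomp := (@pcomp TG).
Notation tchain := (@chain TG txi).

Inductive eqv : term -> term -> Prop :=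
| e_refl t : eqv t t
| e_sym t u : eqv t u -> eqv u t
| e_trans t u w : eqv t u -> eqv u w -> eqv t w
| e_src t u : eqv t u -> eqv (tsrc t) (tsrc u)
| e_tgt t u : eqv t u -> eqv (ttgt t) (ttgt u)
| e_id t u : eqv t u -> eqv (tid t) (tid u)
| e_xi t u : eqv t u -> eqv (txi t) (txi u)
| e_comp p y y' x x' : eqv y y' -> eqv x x' -> eqv (tcomp p y x) (tcomp p y' x')
| g_src c : eqv (gen (src c)) (tsrc (gen c))
| g_tgt c : eqv (gen (tgt c)) (ttgt (gen c))
| g_id c : eqv (gen (idc c)) (tid (gen c))
| g_comp p (x y : C) : composable p x y -> eqv (gen (comp p y x)) (tcomp p (gen y) (gen x))
| a_st0s x : tdim x = 0 -> eqv (tsrc x) x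
| a_st0t x : tdim x = 0 -> eqv (ttgt x) x
| a_glob1 x : 1 < tdim x -> eqv (tsrc (tsrc x)) (tsrc (ttgt x))
| a_glob2 x : 1 < tdim x -> eqv (ttgt (tsrc x)) (ttgt (ttgt x))
| a_sid u : eqv (tsrc (tid u)) u
| a_tid u : eqv (ttgt (tid u)) u
| a_tops p x y : p < tdim x -> tdim y = tdim x -> eqv (ttgtn p x) (tsrcn p y) ->
    S p = tdim x -> eqv (tsrc (tcomp p y x)) (tsrc x)
| a_topt p x y : p < tdim x -> tdim y = tdim x -> eqv (ttgtn p x) (tsrcn p y) ->
    S p = tdim x -> eqv (ttgt (tcomp p y x)) (ttgt y)
| a_lows p x y : p < tdim x -> tdim y = tdim x -> eqv (ttgtn p x) (tsrcn p y) ->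
    S p < tdim x -> eqv (tsrc (tcomp p y x)) (tcomp p (tsrc y) (tsrc x))
| a_lowt p x y : p < tdim x -> tdim y = tdim x -> eqv (ttgtn p x) (tsrcn p y) ->
    S p < tdim x -> eqv (ttgt (tcomp p y x)) (tcomp p (ttgt y) (ttgt x))
| a_assoc p x y z : p < tdim x -> tdim y = tdim x -> eqv (ttgtn p x) (tsrcn p y) ->
    p < tdim y -> tdim z = tdim y -> eqv (ttgtn p y) (tsrcn p z) ->
    eqv (tcomp p (tcomp p z y) x) (tcomp p z (tcomp p y x))
| a_unitl p x : p < tdim x -> eqv (tcomp p (tidn (tdim x) (ttgtn p x)) x) x
| a_unitr p x : p < tdim x -> eqv (tcomp p x (tidn (tdim x) (tsrcn p x))) x
| a_idcomp p x y : p < tdim x -> tdim y = tdim x -> eqv (ttgtn p x) (tsrcn p y) ->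
    eqv (tid (tcomp p y x)) (tcomp p (tid y) (tid x))
| a_inter p q x y x' y' : q < p ->
    p < tdim x -> tdim y = tdim x -> eqv (ttgtn p x) (tsrcn p y) ->
    p < tdim x' -> tdim y' = tdim x' -> eqv (ttgtn p x') (tsrcn p y') ->
    q < tdim x -> tdim x' = tdim x -> eqv (ttgtn q x) (tsrcn q x') ->
    q < tdim y -> tdim y' = tdim y -> eqv (ttgtn q y) (tsrcn q y') ->
    eqv (tcomp q (tcomp p y' x') (tcomp p y x)) (tcomp p (tcomp q y' y) (tcomp q x' x))
| x_st0s x : tdim x = 0 -> eqv (tsrc (txi x)) orig
| x_st0t x : tdim x = 0 -> eqv (ttgt (txi x)) x
| x_stSs x : 0 < tdim x -> eqv (tsrc (txi x)) (txi (ttgt x))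
| x_stSt x : 0 < tdim x -> eqv (ttgt (txi x)) (tchain x x (tdim x))
| x_comp p x y : p < tdim x -> tdim y = tdim x -> eqv (ttgtn p x) (tsrcn p y) ->
    eqv (txi (tcomp p y x))
        (tpcomp (S p) (tpcomp p (tchain (ttgtn (S p) y) x p) (txi x)) (txi y))
| x_id u : eqv (txi (tid u)) (tid (txi u))
| x_xi u : eqv (txi (txi u)) (tid (txi u))
| x_o : eqv (txi orig) (tid orig).

Lemma tdim_iter_src k t : tdim (Nat.iter k tsrc t) = tdim t - k.
Proof. induction k; simpl; [lia|]. rewrite IHk; lia. Qed.
Lemma tdim_iter_tgt k t : tdim (Nat.iter k ttgt t) = tdim t - k.
Proof. induction k; simpl; [lia|]. rewrite IHk; lia. Qed.
Lemma tdim_iter_id k t : tdim (Nat.iter k tid t) = tdim t + k.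
Proof. induction k; simpl; [lia|]. rewrite IHk; lia. Qed.
Lemma tdim_srcn i t : tdim (tsrcn i t) = Nat.min i (tdim t).
Proof. unfold srcn; simpl. rewrite tdim_iter_src; lia. Qed.
Lemma tdim_tgtn i t : tdim (ttgtn i t) = Nat.min i (tdim t).
Proof. unfold tgtn; simpl. rewrite tdim_iter_tgt; lia. Qed.
Lemma tdim_idn n t : tdim (tidn n t) = Nat.max n (tdim t).
Proof. unfold idn; simpl. rewrite tdim_iter_id; lia. Qed.
Lemma tdim_pcomp p y x : tdim (tpcomp p y x) = Nat.max (tdim x) (tdim y).
Proof. unfold pcomp; simpl. rewrite tdim_idn; simpl; lia. Qed.
Lemma tdim_chain b x k : k <= tdim x -> tdim (tchain b x k) = Nat.max (tdim b) k.
Proof.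
  induction k; intro; [unfold chain; simpl; lia|]. rewrite chain_S, tdim_pcomp.
  change (@dim TG) with tdim. cbn [tdim].
  rewrite tdim_srcn, IHk by lia. lia.
Qed.

Hypothesis HC : Pre C.

Lemma eqv_dim t u : eqv t u -> tdim t = tdim u.
Proof.
  induction 1; try (simpl; lia).
  - simpl; rewrite (pr_dim_src HC); auto.
  - simpl; rewrite (pr_dim_tgt HC); auto.
  - simpl; rewrite (pr_dim_id HC); auto.
  - simpl; apply (pr_dim_comp HC); auto.
  - cbn [tdim]. rewrite tdim_idn, tdim_srcn; lia.
  - cbn [tdim]. rewrite tdim_chain by lia; lia.
  - cbn [tdim]. rewrite !tdim_pcomp. change (@dim TG) with tdim. cbn [tdim].
   
    rewrite tdim_chain by lia. rewrite tdim_tgtn. lia.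
Qed.

Lemma eqv_iter_src k t u : eqv t u -> eqv (Nat.iter k tsrc t) (Nat.iter k tsrc u).
Proof. induction k; simpl; intros; [auto|apply e_src; auto]. Qed.
Lemma eqv_iter_tgt k t u : eqv t u -> eqv (Nat.iter k ttgt t) (Nat.iter k ttgt u).
Proof. induction k; simpl; intros; [auto|apply e_tgt; auto]. Qed.
Lemma eqv_srcn i t u : eqv t u -> eqv (tsrcn i t) (tsrcn i u).
Proof. intro E. unfold srcn; simpl. rewrite (eqv_dim E). apply eqv_iter_src; auto. Qed.
Lemma eqv_tgtn i t u : eqv t u -> eqv (ttgtn i t) (ttgtn i u).
Proof. intro E. unfold tgtn; simpl. rewrite (eqv_dim E). apply eqv_iter_tgt; auto. Qed.

Definition compT p x y := p < tdim x /\ tdim y = tdim x /\ eqv (ttgtn p x) (tsrcn p y).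

Lemma compT_resp p x x' y y' : eqv x x' -> eqv y y' -> compT p x y -> compT p x' y'.
Proof.
  intros Ex Ey [A [B D]]. pose proof (eqv_dim Ex); pose proof (eqv_dim Ey).
  repeat split; try lia.
  apply e_trans with (ttgtn p x); [apply eqv_tgtn, e_sym; auto|].
  apply e_trans with (tsrcn p y); auto. apply eqv_srcn; auto.
Qed.

Inductive wf : term -> Prop :=
| w_gen c : wf (gen c)
| w_orig : wf orig
| w_xi t : wf t -> wf (txi t)
| w_src t : wf t -> wf (tsrc t)
| w_tgt t : wf t -> wf (ttgt t)
| w_id t : wf t -> wf (tid t)
| w_comp p x y : wf x -> wf y -> compT p x y -> wf (tcomp p y x).

Definition Qc : Type := { P : term -> Prop | exists t, wf t /\ P = eqv t }.
Definition mk t (H : wf t) : Qc := exist _ (eqv t) (ex_intro _ t (conj H eq_refl)).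
Arguments mk : clear implicits.

Lemma mk_eq t u (Ht : wf t) (Hu : wf u) : eqv t u -> mk t Ht = mk u Hu.
Proof.
  intro E. unfold mk. apply subset_eq_compat. extensionality w.
  apply propositional_extensionality. split; intro.
  - apply e_trans with t; auto. apply e_sym; auto.
  - apply e_trans with u; auto.
Qed.
Lemma mk_inj t u (Ht : wf t) (Hu : wf u) : mk t Ht = mk u Hu -> eqv t u.
Proof. intro E. apply (f_equal (@proj1_sig _ _)) in E. simpl in E. rewrite E. apply e_refl. Qed.

Definition isQ t (q : Qc) := exists H : wf t, mk t H = q.

Lemma isQ_mk t H : isQ t (mk t H).
Proof. exists H; reflexivity. Qed.

Definition repS (q : Qc) := constructive_indefinite_description _ (proj2_sig q).
Definition rep (q : Qc) : term := proj1_sig (repS q).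
Lemma rep_isQ q : isQ (rep q) q.
Proof.
  unfold rep. destruct (repS q) as [t [Ht E]]. simpl. exists Ht.
  destruct q as [P Pp]. unfold mk. apply subset_eq_compat. simpl in E. auto.
Qed.
Lemma isQ_wf t q : isQ t q -> wf t.
Proof. intros [H _]; auto. Qed.
Lemma isQ_uniq t u q : isQ t q -> isQ u q -> eqv t u.
Proof. intros [H1 E1] [H2 E2]. apply (@mk_inj _ _ H1 H2). congruence. Qed.
Lemma isQ_eq t u q r : isQ t q -> isQ u r -> eqv t u -> q = r.
Proof. intros [H1 E1] [H2 E2] E. subst. apply mk_eq; auto. Qed.
Lemma isQ_wf_eq t q u : isQ t q -> wf u -> eqv t u -> isQ u q.
Proof. intros [H1 E1] Hu E. exists Hu. subst. apply mk_eq, e_sym; auto. Qed.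

Definition dimQ (q : Qc) := tdim (rep q).
Definition srcQ (q : Qc) := mk (tsrc (rep q)) (w_src (isQ_wf (rep_isQ q))).
Definition tgtQ (q : Qc) := mk (ttgt (rep q)) (w_tgt (isQ_wf (rep_isQ q))).
Definition idQ (q : Qc) := mk (tid (rep q)) (w_id (isQ_wf (rep_isQ q))).
Definition xiQ (q : Qc) := mk (txi (rep q)) (w_xi (isQ_wf (rep_isQ q))).
Definition oQ := mk orig w_orig.
Definition compQ p (b a : Qc) : Qc :=
  match excluded_middle_informative (compT p (rep a) (rep b)) with
  | left Hc => mk (tcomp p (rep b) (rep a))
                 (w_comp (isQ_wf (rep_isQ a)) (isQ_wf (rep_isQ b)) Hc)
  | right _ => a
  end.

Lemma isQ_dim t q : isQ t q -> dimQ q = tdim t.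
Proof. intro H. unfold dimQ. apply eqv_dim. apply (isQ_uniq (rep_isQ q) H). Qed.
Lemma isQ_src t q : isQ t q -> isQ (tsrc t) (srcQ q).
Proof.
  intro H. apply isQ_wf_eq with (tsrc (rep q)); [apply isQ_mk| |].
  - constructor; apply (isQ_wf H).
  - apply e_src. apply (isQ_uniq (rep_isQ q) H).
Qed.
Lemma isQ_tgt t q : isQ t q -> isQ (ttgt t) (tgtQ q).
Proof.
  intro H. apply isQ_wf_eq with (ttgt (rep q)); [apply isQ_mk| |].
  - constructor; apply (isQ_wf H).
  - apply e_tgt. apply (isQ_uniq (rep_isQ q) H).
Qed.
Lemma isQ_id t q : isQ t q -> isQ (tid t) (idQ q).
Proof.
  intro H. apply isQ_wf_eq with (tid (rep q)); [apply isQ_mk| |].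
  - constructor; apply (isQ_wf H).
  - apply e_id. apply (isQ_uniq (rep_isQ q) H).
Qed.
Lemma isQ_xi t q : isQ t q -> isQ (txi t) (xiQ q).
Proof.
  intro H. apply isQ_wf_eq with (txi (rep q)); [apply isQ_mk| |].
  - constructor; apply (isQ_wf H).
  - apply e_xi. apply (isQ_uniq (rep_isQ q) H).
Qed.
Lemma isQ_compT p a b u v : isQ a u -> isQ b v -> compT p a b ->
  isQ (tcomp p b a) (compQ p v u).
Proof.
  intros Ha Hb Hc. unfold compQ.
  pose proof (isQ_uniq (rep_isQ u) Ha) as Eu. pose proof (isQ_uniq (rep_isQ v) Hb) as Ev.
  destruct (excluded_middle_informative (compT p (rep u) (rep v))) as [Hc'|Hn].
  - apply isQ_wf_eq with (tcomp p (rep v) (rep u)); [apply isQ_mk| |].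
    + constructor; auto; eapply isQ_wf; eauto.
    + apply e_comp; auto.
  - exfalso. apply Hn. apply compT_resp with a b; auto using e_sym.
Qed.

Definition QG : GlobData :=
  {| cell := Qc; dim := dimQ; src := srcQ; tgt := tgtQ; idc := idQ; comp := compQ |}.

Definition CondQ (p : nat) (a b : term) (u v : QG) := composable p u v.

Lemma isQ_srcn i t (q : QG) : isQ t q -> isQ (tsrcn i t) (srcn i q).
Proof.
  intro H. unfold srcn. simpl. rewrite (isQ_dim H). generalize (tdim t - i) as k.
  induction k; simpl; auto. apply isQ_src; auto.
Qed.
Lemma isQ_tgtn i t (q : QG) : isQ t q -> isQ (ttgtn i t) (tgtn i q).
Proof.
  intro H. unfold tgtn. simpl. rewrite (isQ_dim H). generalize (tdim t - i) as k.
  induction k; simpl; auto. apply isQ_tgt; auto.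
Qed.

Lemma compQ_iff p a b (u v : QG) : isQ a u -> isQ b v -> (composable p u v <-> compT p a b).
Proof.
  intros Ha Hb. unfold composable, compT. simpl. rewrite (isQ_dim Ha), (isQ_dim Hb).
  pose proof (isQ_tgtn p Ha) as T. pose proof (isQ_srcn p Hb) as S'.
  split; intros [A [B D]]; repeat split; auto.
  - rewrite D in T. apply (isQ_uniq T S').
  - apply (isQ_eq T S' D).
Qed.

Lemma isQ_comp p a b (u v : QG) : isQ a u -> isQ b v -> composable p u v ->
  isQ (tcomp p b a) (comp p v u).
Proof. intros Ha Hb Hc. apply isQ_compT; auto. apply (compQ_iff p Ha Hb); auto. Qed.

Lemma QG_cases (q : QG) : exists t, isQ t q.
Proof. exists (rep q); apply rep_isQ. Qed.

End Free.

Unset Implicit Arguments.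
Set Implicit Arguments.

Section FreeAx.
Variable C : OmegaCat.
Hypothesis HC : Pre C.

Notation QG := (QG C).
Notation tsrcn := (@srcn (TG C)).
Notation ttgtn := (@tgtn (TG C)).
Notation tidn := (@idn (TG C)).

Lemma qdim t (q : QG) : isQ t q -> dim q = tdim t.
Proof. apply (isQ_dim HC). Qed.

Lemma qsrc t (q : QG) : isQ t q -> isQ (tsrc t) (src q).
Proof. apply isQ_src. Qed.
Lemma qtgt t (q : QG) : isQ t q -> isQ (ttgt t) (tgt q).
Proof. apply isQ_tgt. Qed.
Lemma qid t (q : QG) : isQ t q -> isQ (tid t) (idc q).
Proof. apply isQ_id. Qed.

Ltac qcase q t Ht := destruct (QG_cases q) as [t Ht].

Lemma QPre0 : Pre0 QG.
Proof.
  constructor.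
  - intro q; qcase q t Ht. rewrite (qdim (qsrc Ht)), (qdim Ht). reflexivity.
  - intro q; qcase q t Ht. rewrite (qdim (qtgt Ht)), (qdim Ht). reflexivity.
  - intros q Hq; qcase q t Ht. rewrite (qdim Ht) in Hq. split.
    + apply (isQ_eq (qsrc (qsrc Ht)) (qsrc (qtgt Ht))). apply a_glob1; auto.
    + apply (isQ_eq (qtgt (qsrc Ht)) (qtgt (qtgt Ht))). apply a_glob2; auto.
Qed.
Existing Instance QPre0.

Lemma QPre : Pre QG.
Proof.
  constructor.
  - apply (p0_dim_src QPre0).
  - apply (p0_dim_tgt QPre0).
  - intros q Hq; qcase q t Ht. rewrite (qdim Ht) in Hq. split.
    + apply (isQ_eq (qsrc Ht) Ht). apply a_st0s; auto.
    + apply (isQ_eq (qtgt Ht) Ht). apply a_st0t; auto.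
  - intro q; qcase q t Ht. rewrite (qdim (qid Ht)), (qdim Ht). reflexivity.
  - intros p x y Hc. qcase x tx Hx. qcase y ty Hy.
    rewrite (qdim (isQ_comp HC Hx Hy Hc)), (qdim Hx). reflexivity.
  - apply (p0_glob QPre0).
  - intro q; qcase q t Ht. split.
    + apply (isQ_eq (qsrc (qid Ht)) Ht). apply a_sid.
    + apply (isQ_eq (qtgt (qid Ht)) Ht). apply a_tid.
  - intros p x y Hc Hd. qcase x tx Hx. qcase y ty Hy.
    pose proof (isQ_comp HC Hx Hy Hc) as Hxy.
    destruct (proj1 (compQ_iff HC p Hx Hy) Hc) as [A [B D]].
    rewrite (qdim Hx) in Hd. split.
    + apply (isQ_eq (qsrc Hxy) (qsrc Hx)). apply a_tops; auto.
    + apply (isQ_eq (qtgt Hxy) (qtgt Hy)). apply a_topt; auto.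
  - intros p x y Hc Hd. qcase x tx Hx. qcase y ty Hy.
    pose proof (isQ_comp HC Hx Hy Hc) as Hxy.
    pose proof Hc as [A [B D]].
    assert (Hcs : composable p (src x) (src y)).
    { repeat split; rewrite ?(p0_dim_src QPre0); try lia.
      rewrite tgtn_src1 by lia. rewrite <- (srcn_S p y) by lia. auto. }
    assert (Hct : composable p (tgt x) (tgt y)).
    { repeat split; rewrite ?(p0_dim_tgt QPre0); try lia.
      rewrite <- (tgtn_S p x) by lia. rewrite srcn_tgt1 by lia. auto. }
    destruct (proj1 (compQ_iff HC p Hx Hy) Hc) as [A' [B' D']].
    rewrite (qdim Hx) in Hd. split.
    + apply (isQ_eq (qsrc Hxy) (isQ_comp HC (qsrc Hx) (qsrc Hy) Hcs)). apply a_lows; auto.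
    + apply (isQ_eq (qtgt Hxy) (isQ_comp HC (qtgt Hx) (qtgt Hy) Hct)). apply a_lowt; auto.
Qed.
Existing Instance QPre.


Lemma qidn n t (q : QG) : isQ t q -> isQ (tidn n t) (idn n q).
Proof.
  intro H. unfold idn. rewrite (qdim H). change (@dim (TG C) t) with (tdim t).
  generalize (n - tdim t) as k. induction k; simpl; auto. apply isQ_id; auto.
Qed.
Lemma qxi t (q : QG) : isQ t q -> isQ (txi t) (xiQ q).
Proof. apply isQ_xi. Qed.

Lemma Qomega : is_omega_cat QG.
Proof.
  constructor.
  - intros; apply (pr_dim_src QPre).
  - intros; apply (pr_dim_tgt QPre).
  - apply (pr_st0 QPre).
  - apply (pr_dim_id QPre).
  - apply (pr_dim_comp QPre).
  - apply (pr_glob QPre).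
  - apply (pr_st_id QPre).
  - apply (pr_top QPre).
  - apply (pr_low QPre).
  - intros p x y z Cxy Cyz. qcase x tx Hx. qcase y ty Hy. qcase z tz Hz.
    destruct (cmp_assoc_ok _ _ _ _ Cxy Cyz) as [C1 C2].
    pose proof (isQ_comp HC Hy Hz Cyz) as Hyz. pose proof (isQ_comp HC Hx Hy Cxy) as Hxy.
    apply (isQ_eq (isQ_comp HC Hx Hyz C1) (isQ_comp HC Hxy Hz C2)).
    destruct (proj1 (compQ_iff HC p Hx Hy) Cxy) as [A1 [A2 A3]].
    destruct (proj1 (compQ_iff HC p Hy Hz) Cyz) as [B1 [B2 B3]].
    apply a_assoc; auto.
  - intros p x Hp. qcase x tx Hx. destruct (cmp_unit_ok p x Hp) as [C1 _].
    pose proof (qidn (dim x) (isQ_tgtn HC p Hx)) as Hi.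
    apply (isQ_eq (isQ_comp HC Hx Hi C1) Hx). rewrite (qdim Hx) in *. apply a_unitl; auto.
  - intros p x Hp. qcase x tx Hx. destruct (cmp_unit_ok p x Hp) as [_ C1].
    pose proof (qidn (dim x) (isQ_srcn HC p Hx)) as Hi.
    apply (isQ_eq (isQ_comp HC Hi Hx C1) Hx). rewrite (qdim Hx) in *. apply a_unitr; auto.
  - intros p x y Cxy. qcase x tx Hx. qcase y ty Hy.
    pose proof (cmp_idc_ok _ _ _ Cxy) as C1.
    apply (isQ_eq (qid (isQ_comp HC Hx Hy Cxy)) (isQ_comp HC (qid Hx) (qid Hy) C1)).
    destruct (proj1 (compQ_iff HC p Hx Hy) Cxy) as [A1 [A2 A3]].
    apply a_idcomp; auto.
  - intros p q x y x' y' Hqp C1 C2 C3 C4.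
    qcase x tx Hx. qcase y ty Hy. qcase x' tx' Hx'. qcase y' ty' Hy'.
    destruct (cmp_interchange_ok _ _ _ _ _ _ Hqp C1 C2 C3 C4) as [D1 D2].
    pose proof (isQ_comp HC Hx Hy C1) as E1. pose proof (isQ_comp HC Hx' Hy' C2) as E2.
    pose proof (isQ_comp HC Hx Hx' C3) as E3. pose proof (isQ_comp HC Hy Hy' C4) as E4.
    apply (isQ_eq (isQ_comp HC E1 E2 D1) (isQ_comp HC E3 E4 D2)).
    destruct (proj1 (compQ_iff HC p Hx Hy) C1) as [A1 [A2 A3]].
    destruct (proj1 (compQ_iff HC p Hx' Hy') C2) as [B1 [B2 B3]].
    destruct (proj1 (compQ_iff HC q Hx Hx') C3) as [F1 [F2 F3]].
    destruct (proj1 (compQ_iff HC q Hy Hy') C4) as [G1 [G2 G3]].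
    apply a_inter; auto.
Qed.

Definition CondQ' (p : nat) (a b : TG C) (u v : QG) := composable p u v.

Lemma qR_dim (a : TG C) (u : QG) : isQ a u -> dim a = dim u.
Proof. intro H; rewrite (qdim H); reflexivity. Qed.

Definition xiG : QG -> QG := @xiQ C.
Definition oG : QG := oQ C.
Lemma qxiG t (q : QG) : isQ t q -> isQ (txi t) (xiG q).
Proof. apply isQ_xi. Qed.

Lemma q_st0 (x : QG) : dim x = 0 -> src (xiG x) = oG /\ tgt (xiG x) = x.
Proof.
  intro Hd. qcase x tx Hx. rewrite (qdim Hx) in Hd. split.
  - apply (isQ_eq (qsrc (qxiG Hx)) (isQ_mk (w_orig C) : isQ _ oG)). apply x_st0s; auto.
  - apply (isQ_eq (qtgt (qxiG Hx)) Hx). apply x_st0t; auto.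
Qed.

Lemma q_xi_dim (x : QG) : dim (xiG x) = S (dim x).
Proof. qcase x tx Hx. rewrite (qdim (qxiG Hx)), (qdim Hx). reflexivity. Qed.

Lemma q_stS : forall n (z : QG), dim z = n -> 0 < n ->
  src (xiG z) = xiG (tgt z) /\ tgt (xiG z) = chain (xiG) z z (dim z).
Proof.
  induction n as [n IH] using lt_wf_ind. intros z Hz Hn. qcase z tz Htz.
  split.
  - apply (isQ_eq (qsrc (qxiG Htz)) (qxiG (qtgt Htz))). apply x_stSs. rewrite <- (qdim Htz); lia.
  - destruct (@chain_main QG QPre (oG) (xiG) n q_xi_dim q_st0
       ltac:(intros w Hw1 Hw2; apply (IH (dim w)); auto) n (le_n _) z z ltac:(lia) ltac:(lia)
       ltac:(auto)) as [_ [OK _]].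
    assert (Hch : isQ (@chain (TG C) (@txi C) tz tz n) (chain (xiG) z z n)).
    { apply (@R_chain (TG C) QG (@txi C) xiG (@isQ C) CondQ' qR_dim (fun a u H => isQ_src H)
        (fun a u H => isQ_id H) (fun a u H => isQ_xi H)
        (fun p a b u v Ha Hb Hc => isQ_comp HC Ha Hb Hc)); auto. }
    rewrite Hz. apply (isQ_eq (qtgt (qxiG Htz)) Hch).
    rewrite (qdim Htz) in Hz. rewrite <- Hz. apply x_stSt. lia.
Qed.

Lemma q_stS' (z : QG) : 0 < dim z ->
  src (xiG z) = xiG (tgt z) /\ tgt (xiG z) = chain (xiG) z z (dim z).
Proof. intro; apply (q_stS (n:=dim z)); auto. Qed.

Lemma Qexp : is_expansion (G:=QG) (oG) (xiG).
Proof.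
  constructor.
  - apply (qdim (isQ_mk (w_orig C) : isQ _ oG)).
  - apply q_xi_dim.
  - apply q_st0.
  - apply q_stS'.
  - intros p x y Hc. qcase x tx Hx. qcase y ty Hy.
    destruct (@ex_ok QG QPre (oG) (xiG) (S (dim x)) q_xi_dim q_st0
      ltac:(intros; apply q_stS'; auto) p x y Hc ltac:(lia)) as [O1 [O2 O3]].
    assert (Hr := @R_exRHS (TG C) QG (@txi C) xiG (@isQ C) CondQ'
      qR_dim (fun a u H => isQ_src H) (fun a u H => isQ_tgt H) (fun a u H => isQ_id H)
      (fun a u H => isQ_xi H) (fun p a b u v Ha Hb Hc => isQ_comp HC Ha Hb Hc) p tx ty x y Hx Hy
      ltac:(intros i Hi; apply O1; auto) O2 O3).
    apply (isQ_eq (qxiG (isQ_comp HC Hx Hy Hc)) Hr).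
    destruct (proj1 (compQ_iff HC p Hx Hy) Hc) as [A1 [A2 A3]].
    apply x_comp; auto.
  - intro u; qcase u t Ht. apply (isQ_eq (qxiG (qid Ht)) (qid (qxiG Ht))). apply x_id.
  - intro u; qcase u t Ht. apply (isQ_eq (qxiG (qxiG Ht)) (qid (qxiG Ht))). apply x_xi.
  - apply (isQ_eq (qxiG (isQ_mk (w_orig C) : isQ _ oG)) (qid (isQ_mk (w_orig C) : isQ _ oG))). apply x_o.
Qed.

End FreeAx.

Unset Implicit Arguments.
Set Implicit Arguments.

Section Eval.
Variables (C : OmegaCat) (D : ExpCat) (f : ofun C (ecat D)).

Notation tsrcn := (@srcn (TG C)).
Notation ttgtn := (@tgtn (TG C)).
Notation tidn := (@idn (TG C)).

Definition HD : Pre D := omega_pre (ocax (ecat D)).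
Existing Instance HD.
Definition HC : Pre C := omega_pre (ocax C).
Definition XD := expax D.

Fixpoint ev (t : term C) : D :=
  match t with
  | gen _ c => f c
  | orig _ => origin D
  | txi t => xi D (ev t)
  | tsrc t => src (ev t)
  | ttgt t => tgt (ev t)
  | tid t => idc (ev t)
  | tcomp p y x =>
      if excluded_middle_informative (composable p (ev x) (ev y)) then comp p (ev y) (ev x)
      else ev x
  end.

Lemma f_dim c : dim (f c) = dim c.
Proof. pose proof (ofn_ax f) as [A _]; apply A. Qed.
Lemma f_src c : f (src c) = src (f c).
Proof. pose proof (ofn_ax f) as [_ [A _]]; apply A. Qed.
Lemma f_tgt c : f (tgt c) = tgt (f c).
Proof. pose proof (ofn_ax f) as [_ [_ [A _]]]; apply A. Qed.
Lemma f_id c : f (idc c) = idc (f c).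
Proof. pose proof (ofn_ax f) as [_ [_ [_ [A _]]]]; apply A. Qed.
Lemma f_comp p x y : composable p x y -> f (comp p y x) = comp p (f y) (f x).
Proof. pose proof (ofn_ax f) as [_ [_ [_ [_ A]]]]; apply A. Qed.

Lemma ev_dim t : dim (ev t) = tdim t.
Proof.
  induction t; simpl.
  - apply f_dim.
  - apply (ex_dim_o XD).
  - rewrite (ex_dim XD); auto.
  - rewrite (pr_dim_src HD); auto.
  - rewrite (pr_dim_tgt HD); auto.
  - rewrite (pr_dim_id HD); auto.
  - destruct (excluded_middle_informative _); auto. rewrite (pr_dim_comp HD); auto.
Qed.

Lemma ev_comp {p x y} : composable p (ev x) (ev y) -> ev (tcomp p y x) = comp p (ev y) (ev x).
Proof. intro Hc. simpl. destruct (excluded_middle_informative _); tauto. Qed.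

Definition Rev (t : TG C) (d : D) := ev t = d.
Definition CondD (p : nat) (a b : TG C) (u v : D) := composable p u v.

Lemma Rev_dim a u : Rev a u -> dim a = dim u.
Proof. intro E; rewrite <- E, ev_dim; reflexivity. Qed.
Lemma Rev_comp p a b u v : Rev a u -> Rev b v -> CondD p a b u v -> Rev (comp p b a) (comp p v u).
Proof. unfold Rev, CondD; intros <- <- Hc. apply ev_comp; auto. Qed.

Lemma ev_srcn i t : ev (tsrcn i t) = srcn i (ev t).
Proof. apply (@R_srcn (TG C) D Rev Rev_dim (fun a u (E : Rev a u) => f_equal src E)). reflexivity. Qed.
Lemma ev_tgtn i t : ev (ttgtn i t) = tgtn i (ev t).
Proof. apply (@R_tgtn (TG C) D Rev Rev_dim (fun a u (E : Rev a u) => f_equal tgt E)). reflexivity. Qed.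
Lemma ev_idn n t : ev (tidn n t) = idn n (ev t).
Proof. apply (@R_idn (TG C) D Rev Rev_dim (fun a u (E : Rev a u) => f_equal idc E)). reflexivity. Qed.

Lemma ev_compT {p x y} : p < tdim x -> tdim y = tdim x -> ev (ttgtn p x) = ev (tsrcn p y) ->
  composable p (ev x) (ev y).
Proof.
  intros A B E. rewrite ev_tgtn, ev_srcn in E. repeat split; rewrite ?ev_dim; auto.
Qed.

Lemma stS_D z : 0 < dim z -> src (xi D z) = xi D (tgt z) /\ tgt (xi D z) = chain (xi D) z z (dim z).
Proof. apply (ex_stS XD). Qed.

Lemma ev_chain b x k : k <= tdim b -> k <= tdim x -> (forall i, i < k -> srcn i (ev b) = srcn i (ev x)) ->
  ev (@chain (TG C) (@txi C) b x k) = chain (xi D) (ev b) (ev x) k.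
Proof.
  intros Hb Hx Hbx.
  destruct (@chain_main D HD (origin D) (xi D) (S k) (ex_dim XD) (ex_st0 XD)
     ltac:(intros; apply stS_D; auto) k ltac:(lia) (ev b) (ev x) ltac:(rewrite ev_dim; lia)
     ltac:(rewrite ev_dim; lia) Hbx) as [_ [OK _]].
  apply (@R_chain (TG C) D (@txi C) (xi D) Rev CondD Rev_dim
    (fun a u (E : Rev a u) => f_equal src E) (fun a u (E : Rev a u) => f_equal idc E)
    (fun a u (E : Rev a u) => f_equal (xi D) E) Rev_comp); try reflexivity.
  intros i Hi. apply OK; auto.
Qed.

Lemma ev_src' t : ev (tsrc t) = src (ev t). Proof. reflexivity. Qed.
Lemma ev_tgt' t : ev (ttgt t) = tgt (ev t). Proof. reflexivity. Qed.
Lemma ev_id' t : ev (tid t) = idc (ev t). Proof. reflexivity. Qed.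
Lemma ev_xi' t : ev (txi t) = xi D (ev t). Proof. reflexivity. Qed.
Lemma ev_gen' (c : C) : ev (gen C c) = f c. Proof. reflexivity. Qed.
Lemma ev_orig' : ev (orig C) = origin D. Proof. reflexivity. Qed.

Lemma ev_resp t u : eqv t u -> ev t = ev u.
Proof.
  induction 1; try (simpl; congruence);
    rewrite ?ev_src', ?ev_tgt', ?ev_id', ?ev_xi', ?ev_gen', ?ev_orig'.
  - simpl. rewrite IHeqv1, IHeqv2; reflexivity.
  - apply f_src.
  - apply f_tgt.
  - apply f_id.
  - simpl. rewrite f_comp by auto. destruct (excluded_middle_informative _) as [|n]; auto.
    exfalso; apply n. apply functor_composable; auto. apply (ofn_ax f).
  - apply (pr_st0 HD); rewrite ev_dim; auto.
  - apply (pr_st0 HD); rewrite ev_dim; auto.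
  - apply (pr_glob HD); rewrite ev_dim; auto.
  - apply (pr_glob HD); rewrite ev_dim; auto.
  - apply (pr_st_id HD).
  - apply (pr_st_id HD).
  - rewrite ev_comp by (apply ev_compT; auto). apply (pr_top HD); [apply ev_compT; auto|rewrite ev_dim; auto].
  - rewrite ev_comp by (apply ev_compT; auto). apply (pr_top HD); [apply ev_compT; auto|rewrite ev_dim; auto].
  - pose proof (ev_compT H H0 IHeqv) as Hc. rewrite ev_comp by auto.
    pose proof Hc as [A [B E]].
    assert (Hcs : composable p (src (ev x)) (src (ev y))).
    { rewrite ev_dim in *. repeat split; rewrite ?(pr_dim_src HD), ?ev_dim; try lia.
      rewrite tgtn_src1 by (rewrite ev_dim; lia). rewrite <- (srcn_S p (ev y)) by (rewrite ev_dim; lia). auto. }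
    rewrite ev_comp by auto. apply (pr_low HD); auto. rewrite ev_dim; auto.
  - pose proof (ev_compT H H0 IHeqv) as Hc. rewrite ev_comp by auto.
    pose proof Hc as [A [B E]].
    assert (Hct : composable p (tgt (ev x)) (tgt (ev y))).
    { rewrite ev_dim in *. repeat split; rewrite ?(pr_dim_tgt HD), ?ev_dim; try lia.
      rewrite <- (tgtn_S p (ev x)) by (rewrite ev_dim; lia). rewrite srcn_tgt1 by (rewrite ev_dim; lia). auto. }
    rewrite ev_comp by auto. apply (pr_low HD); auto. rewrite ev_dim; auto.
  - assert (C1 : composable p (ev x) (ev y)) by (apply ev_compT; auto).
    assert (C2 : composable p (ev y) (ev z)) by (apply ev_compT; auto).
    destruct (cmp_assoc_ok _ _ _ _ C1 C2) as [D1 D2].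
    rewrite (@ev_comp p x (tcomp p z y)) by (rewrite (ev_comp C2); auto).
    rewrite (@ev_comp p (tcomp p y x) z) by (rewrite (ev_comp C1); auto).
    rewrite (ev_comp C2), (ev_comp C1). apply (oc_assoc (ocax (ecat D))); auto.
  - assert (Hp : p < dim (ev x)) by (rewrite ev_dim; auto).
    destruct (cmp_unit_ok p (ev x) Hp) as [C1 _].
    rewrite ev_comp; rewrite ev_idn, ev_tgtn, <- ev_dim; auto.
    apply (oc_unit_l (ocax (ecat D))); auto.
  - assert (Hp : p < dim (ev x)) by (rewrite ev_dim; auto).
    destruct (cmp_unit_ok p (ev x) Hp) as [_ C1].
    rewrite ev_comp; rewrite ev_idn, ev_srcn, <- ev_dim; auto.
    apply (oc_unit_r (ocax (ecat D))); auto.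
  - pose proof (ev_compT H H0 IHeqv) as C1. pose proof (cmp_idc_ok _ _ _ C1) as C2.
    rewrite (ev_comp C1). rewrite ev_comp by auto. apply (oc_id_comp (ocax (ecat D))); auto.
  - assert (C1 : composable p (ev x) (ev y)) by (apply ev_compT; auto).
    assert (C2 : composable p (ev x') (ev y')) by (apply ev_compT; auto).
    assert (C3 : composable q (ev x) (ev x')) by (apply ev_compT; auto).
    assert (C4 : composable q (ev y) (ev y')) by (apply ev_compT; auto).
    destruct (cmp_interchange_ok _ _ _ _ _ _ H C1 C2 C3 C4) as [D1 D2].
    rewrite (@ev_comp q (tcomp p y x) (tcomp p y' x')) by (rewrite (ev_comp C1), (ev_comp C2); auto).
    rewrite (@ev_comp p (tcomp q x' x) (tcomp q y' y)) by (rewrite (ev_comp C3), (ev_comp C4); auto).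
    rewrite (ev_comp C1), (ev_comp C2), (ev_comp C3), (ev_comp C4).
    apply (oc_interchange (ocax (ecat D))); auto.
  - apply (ex_st0 XD); rewrite ev_dim; auto.
  - apply (ex_st0 XD); rewrite ev_dim; auto.
  - apply (ex_stS XD); rewrite ev_dim; auto.
  - rewrite ev_chain by (auto; lia). rewrite <- ev_dim. apply (ex_stS XD); rewrite ev_dim; auto.
  - pose proof (ev_compT H H0 IHeqv) as Hc. rewrite (ev_comp Hc).
    destruct (@ex_ok D HD (origin D) (xi D) (S (dim (ev x))) (ex_dim XD) (ex_st0 XD)
      ltac:(intros; apply stS_D; auto) p (ev x) (ev y) Hc ltac:(lia)) as [O1 [O2 O3]].
    rewrite (ex_comp XD) by auto. symmetry.
    apply (@R_exRHS (TG C) D (@txi C) (xi D) Rev CondD Rev_dim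
      (fun a u (E : Rev a u) => f_equal src E) (fun a u (E : Rev a u) => f_equal tgt E)
      (fun a u (E : Rev a u) => f_equal idc E) (fun a u (E : Rev a u) => f_equal (xi D) E)
      Rev_comp p x y (ev x) (ev y) eq_refl eq_refl); auto.
  - apply (ex_id XD).
  - apply (ex_xi XD).
  - apply (ex_o XD).
Qed.

End Eval.

Unset Implicit Arguments.
Set Implicit Arguments.

Definition QO (C : OmegaCat) : OmegaCat := {| ocdata := QG C; ocax := Qomega C (HC C) |}.
Definition FQ (C : OmegaCat) : ExpCat :=
  {| ecat := QO C; origin := oG C; xi := @xiG C; expax := Qexp C (HC C) |}.

Section Eta.
Variable C : OmegaCat.
Notation tsrcn := (@srcn (TG C)).
Notation ttgtn := (@tgtn (TG C)).

Lemma gen_iter_src k (c : C) : eqv (gen C (Nat.iter k src c)) (Nat.iter k (@tsrc C) (gen C c)).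
Proof.
  induction k; simpl; [apply e_refl|]. eapply e_trans; [apply g_src|]. apply e_src; auto.
Qed.
Lemma gen_iter_tgt k (c : C) : eqv (gen C (Nat.iter k tgt c)) (Nat.iter k (@ttgt C) (gen C c)).
Proof.
  induction k; simpl; [apply e_refl|]. eapply e_trans; [apply g_tgt|]. apply e_tgt; auto.
Qed.
Lemma gen_srcn i (c : C) : eqv (gen C (srcn i c)) (tsrcn i (gen C c)).
Proof. apply gen_iter_src. Qed.
Lemma gen_tgtn i (c : C) : eqv (gen C (tgtn i c)) (ttgtn i (gen C c)).
Proof. apply gen_iter_tgt. Qed.

Definition etaf (c : C) : QO C := mk (w_gen C c).
Lemma isQ_eta c : isQ (gen C c) (etaf c).
Proof. apply isQ_mk. Qed.

Lemma eta_ax : is_omega_functor (C := C) (D := QO C) etaf.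
Proof.
  repeat split.
  - intro c. apply (qdim (HC C) (isQ_eta c)).
  - intro c. apply (isQ_eq (isQ_eta _) (qsrc (isQ_eta c))). apply g_src.
  - intro c. apply (isQ_eq (isQ_eta _) (qtgt (isQ_eta c))). apply g_tgt.
  - intro c. apply (isQ_eq (isQ_eta _) (qid (isQ_eta c))). apply g_id.
  - intros p x y Hc. pose proof Hc as [A [B E]].
    assert (Hq : composable (G := QG C) p (etaf x) (etaf y)).
    { apply (proj2 (compQ_iff (HC C) p (isQ_eta x) (isQ_eta y))).
      repeat split; simpl; auto.
      eapply e_trans; [apply e_sym, gen_tgtn|]. rewrite E. apply gen_srcn. }
    apply (isQ_eq (isQ_eta _) (isQ_comp (HC C) (isQ_eta x) (isQ_eta y) Hq)).
    apply g_comp; auto.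
Qed.

Definition eta : ofun C (QO C) := {| ofn := etaf; ofn_ax := eta_ax |}.
End Eta.

Section Ext.
Variables (C : OmegaCat) (D : ExpCat) (f : ofun C D).

Definition extf (q : QO C) : D := ev D f (rep q).
Lemma ext_isQ t q : isQ t q -> extf q = ev D f t.
Proof. intro H. apply ev_resp. apply (isQ_uniq (rep_isQ q) H). Qed.

Lemma ext_ax : is_omega_functor (C := QO C) (D := D) extf.
Proof.
  repeat split.
  - intro q. destruct (QG_cases q) as [t Ht]. rewrite (ext_isQ Ht), ev_dim.
    symmetry; apply (qdim (HC C) Ht).
  - intro q. destruct (QG_cases q) as [t Ht]. rewrite (ext_isQ Ht). apply (ext_isQ (qsrc Ht)).
  - intro q. destruct (QG_cases q) as [t Ht]. rewrite (ext_isQ Ht). apply (ext_isQ (qtgt Ht)).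
  - intro q. destruct (QG_cases q) as [t Ht]. rewrite (ext_isQ Ht). apply (ext_isQ (qid Ht)).
  - intros p x y Hc. destruct (QG_cases x) as [tx Hx]. destruct (QG_cases y) as [ty Hy].
    rewrite (ext_isQ Hx), (ext_isQ Hy). transitivity (ev D f (tcomp p ty tx)).
    { apply ext_isQ. apply (isQ_comp (HC C) Hx Hy Hc). }
    destruct (proj1 (compQ_iff (HC C) p Hx Hy) Hc) as [A [B E]].
    apply ev_comp. apply ev_compT; auto. apply ev_resp; auto.
Qed.

Definition exto : ofun (QO C) D := {| ofn := extf; ofn_ax := ext_ax |}.

Lemma ext_o : exto (origin (FQ C)) = origin D.
Proof. apply (ext_isQ (isQ_mk (w_orig C))). Qed.
Lemma ext_xi x : exto (xi (FQ C) x) = xi D (exto x).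
Proof.
  destruct (QG_cases x) as [t Ht]. simpl. rewrite (ext_isQ Ht). apply (ext_isQ (qxiG Ht)).
Qed.

Definition ext : efun (FQ C) D := @Build_efun (FQ C) D exto ext_o ext_xi.

Lemma ext_eta c : ext (ofn (eta C) c) = f c.
Proof. apply (ext_isQ (isQ_eta C c)). Qed.

Lemma ext_unique (g : efun (FQ C) D) : (forall c, g (ofn (eta C) c) = f c) -> forall q, g q = ext q.
Proof.
  intros Hg q. destruct (QG_cases q) as [t Ht].
  transitivity (ev D f t); [|symmetry; apply (ext_isQ Ht)].
  pose proof (isQ_wf Ht) as W. revert q Ht. induction W; intros q Ht.
  - rewrite <- (isQ_eq (isQ_eta C c) Ht (e_refl _)). apply Hg.
  - rewrite <- (isQ_eq (isQ_mk (w_orig C)) Ht (e_refl _)). apply (efn_o g).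
  - rewrite <- (isQ_eq (qxiG (isQ_mk W)) Ht (e_refl _)).
    change (g (xi (FQ C) (mk W)) = xi D (ev D f t)). rewrite (efn_xi g). f_equal; apply IHW; apply isQ_mk.
  - rewrite <- (isQ_eq (qsrc (isQ_mk W)) Ht (e_refl _)).
    pose proof (ofn_ax (efn g)) as [_ [A _]]. etransitivity; [apply A|]. simpl. f_equal; apply IHW; apply isQ_mk.
  - rewrite <- (isQ_eq (qtgt (isQ_mk W)) Ht (e_refl _)).
    pose proof (ofn_ax (efn g)) as [_ [_ [A _]]]. etransitivity; [apply A|]. simpl. f_equal; apply IHW; apply isQ_mk.
  - rewrite <- (isQ_eq (qid (isQ_mk W)) Ht (e_refl _)).
    pose proof (ofn_ax (efn g)) as [_ [_ [_ [A _]]]]. etransitivity; [apply A|]. simpl. f_equal; apply IHW; apply isQ_mk.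
  - assert (Hc : composable (G := QG C) p (mk W1) (mk W2)).
    { apply (proj2 (compQ_iff (HC C) p (isQ_mk W1) (isQ_mk W2))); auto. }
    rewrite <- (isQ_eq (isQ_comp (HC C) (isQ_mk W1) (isQ_mk W2) Hc) Ht (e_refl _)).
    pose proof (ofn_ax (efn g)) as Hfun. pose proof Hfun as [_ [_ [_ [_ A]]]].
    pose proof (functor_composable Hfun Hc) as Hc2.
    rewrite (IHW1 _ (isQ_mk W1)), (IHW2 _ (isQ_mk W2)) in Hc2.
    rewrite (ev_comp D f Hc2).
    rewrite <- (IHW1 _ (isQ_mk W1)), <- (IHW2 _ (isQ_mk W2)).
    apply A; auto.
Qed.

End Ext.

Unset Implicit Arguments.

Lemma efun_agree (C : OmegaCat) (D : ExpCat) (g1 g2 : efun (FQ C) D) :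
  (forall c, g1 (eta C c) = g2 (eta C c)) -> g1 = g2.
Proof.
  intro H. apply efun_eq, ofun_eq. intro q.
  pose (f0 := ofun_comp (efn g2) (eta C) : ofun C (ecat D)).
  rewrite (ext_unique f0 g1 H q). symmetry. apply (ext_unique f0 g2 (fun c => eq_refl) q).
Qed.

Definition Fmap (a b : OmegaCat) (g : ofun a b) : efun (FQ a) (FQ b) :=
  ext (FQ b) (ofun_comp (eta b) g).

Arguments Fmap {a b}.
Lemma Fmap_eta a b (g : ofun a b) c : Fmap g (eta a c) = eta b (g c).
Proof. unfold Fmap. rewrite ext_eta. reflexivity. Qed.

Lemma Fmap_eta' a b (g : ofun a b) c :
  extf (FQ b) (ofun_comp (eta b) g) (etaf a c) = etaf b (g c).
Proof. apply (ext_eta (FQ b) (ofun_comp (eta b) g) c). Qed.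
Lemma counit_eta' (d : ExpCat) x : extf d (ofun_id (ecat d)) (etaf (ecat d) x) = x.
Proof. apply (ext_eta d (ofun_id (ecat d)) x). Qed.

Definition Fr : Functor OmegaCatC ExpC.
Proof.
  refine {| fobj := (FQ : OmegaCatC -> ExpC);
            fmap := fun a b (g : @hom OmegaCatC a b) => (Fmap g : @hom ExpC (FQ a) (FQ b)) |}.
  - intro a. apply efun_agree. intro c. rewrite Fmap_eta. reflexivity.
  - intros a b c f g. apply efun_agree. intro x. simpl. rewrite !Fmap_eta'. reflexivity.
Defined.

Definition counit (d : ExpCat) : efun (FQ (ecat d)) d := ext d (ofun_id (ecat d)).
Lemma counit_eta (d : ExpCat) x : counit d (eta (ecat d) x) = x.
Proof. apply counit_eta'. Qed.

Definition Adj : Adjunction ForgetExp Fr.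
Proof.
  refine (@Build_Adjunction OmegaCatC ExpC ForgetExp Fr (fun c => eta c) (fun d => counit d) _ _ _ _).
  - intros c c' g. apply ofun_eq. intro x. simpl. apply Fmap_eta'.
  - intros d d' h. apply efun_agree. intro x. simpl. rewrite Fmap_eta', !counit_eta'. reflexivity.
  - intro c. apply efun_agree. intro x. simpl. rewrite Fmap_eta'. apply (counit_eta' (FQ c)).
  - intro d. apply ofun_eq. intro x. simpl. apply counit_eta'.
Defined.

Section OfunFacts.
Context {C D : OmegaCat} (f : ofun C D).
Lemma of_dim x : dim (f x) = dim x.
Proof. pose proof (ofn_ax f) as [A _]; apply A. Qed.
Lemma of_src x : f (src x) = src (f x).
Proof. pose proof (ofn_ax f) as [_ [A _]]; apply A. Qed.
Lemma of_tgt x : f (tgt x) = tgt (f x).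
Proof. pose proof (ofn_ax f) as [_ [_ [A _]]]; apply A. Qed.
Lemma of_idc x : f (idc x) = idc (f x).
Proof. pose proof (ofn_ax f) as [_ [_ [_ [A _]]]]; apply A. Qed.
Lemma of_comp p x y : composable p x y -> f (comp p y x) = comp p (f y) (f x).
Proof. pose proof (ofn_ax f) as [_ [_ [_ [_ A]]]]; apply A. Qed.
Lemma of_srcn i x : f (srcn i x) = srcn i (f x).
Proof.
  unfold srcn. rewrite of_dim. generalize (dim x - i) as k. induction k; simpl; auto.
  rewrite of_src, IHk; auto.
Qed.
Lemma of_tgtn i x : f (tgtn i x) = tgtn i (f x).
Proof.
  unfold tgtn. rewrite of_dim. generalize (dim x - i) as k. induction k; simpl; auto.
  rewrite of_tgt, IHk; auto.
Qed.
End OfunFacts.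

Section Transfer.
Variables (A : OmegaCat) (a : ofun (QO A) A).
Hypothesis Hu : forall x, a (eta A x) = x.
Hypothesis Hx : forall q, a (xiG q) = a (xiG (eta A (a q))).

Definition oA : A := a (oG A).
Definition xiA (x : A) : A := a (xiG (eta A x)).

Lemma a_xi q : a (xiG q) = xiA (a q).
Proof. apply Hx. Qed.

Definition QXP := Qexp A (HC A).
Definition QP : Pre (QO A) := QPre A (HC A).
Existing Instance QP.

Lemma eta_dim x : @dim (QG A) (eta A x) = dim x.
Proof. apply (of_dim (eta A)). Qed.

Definition Ra (q : QO A) (u : A) := a q = u.
Definition CondS (p : nat) (q1 q2 : QO A) (u v : A) := composable p q1 q2.

Lemma Ra_dim q u : Ra q u -> dim q = dim u.
Proof. unfold Ra; intros <-; symmetry; apply of_dim. Qed.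
Lemma Ra_src q u : Ra q u -> Ra (src q) (src u).
Proof. unfold Ra; intros <-; apply of_src. Qed.
Lemma Ra_tgt q u : Ra q u -> Ra (tgt q) (tgt u).
Proof. unfold Ra; intros <-; apply of_tgt. Qed.
Lemma Ra_idc q u : Ra q u -> Ra (idc q) (idc u).
Proof. unfold Ra; intros <-; apply of_idc. Qed.
Lemma Ra_xi q u : Ra q u -> Ra (xiG q) (xiA u).
Proof. unfold Ra; intros <-; apply a_xi. Qed.
Lemma Ra_comp p q1 q2 u v : Ra q1 u -> Ra q2 v -> CondS p q1 q2 u v -> Ra (comp p q2 q1) (comp p v u).
Proof. unfold Ra, CondS; intros <- <- Hc; apply of_comp; auto. Qed.

Lemma QstS (z : QO A) : 0 < dim z ->
  src (xiG z) = xiG (tgt z) /\ tgt (xiG z) = chain (@xiG A) z z (dim z).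
Proof. apply (ex_stS QXP). Qed.

Lemma A_exp : is_expansion oA xiA.
Proof.
  constructor.
  - unfold oA. rewrite of_dim. apply (ex_dim_o QXP).
  - intro x. unfold xiA. rewrite of_dim. rewrite (ex_dim QXP). f_equal. apply (of_dim (eta A)).
  - intros x Hx0. unfold xiA, oA.
    destruct (ex_st0 QXP (x := eta A x)) as [E1 E2]; [rewrite eta_dim; auto|].
    split.
    + transitivity (a (src (xiG (eta A x)))); [symmetry; apply (of_src a)|]. f_equal. exact E1.
    + transitivity (a (tgt (xiG (eta A x)))); [symmetry; apply (of_tgt a)|].
      transitivity (a (eta A x)); [f_equal; exact E2|apply Hu].
  - intros x Hx0. unfold xiA.
    destruct (QstS (eta A x)) as [E1 E2]; [rewrite eta_dim; auto|].
    split.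
    + transitivity (a (src (xiG (eta A x)))); [symmetry; apply (of_src a)|].
      transitivity (a (xiG (tgt (eta A x)))); [f_equal; exact E1|].
      rewrite a_xi, of_tgt, Hu. reflexivity.
    + transitivity (a (tgt (xiG (eta A x)))); [symmetry; apply (of_tgt a)|].
      transitivity (a (chain (@xiG A) (eta A x) (eta A x) (dim x))).
      { f_equal. rewrite E2. f_equal. apply eta_dim. }
      destruct (@chain_main (QO A) QP (oG A) (@xiG A) (S (dim x)) (ex_dim QXP) (ex_st0 QXP)
        ltac:(intros; apply QstS; auto) (dim x) ltac:(lia) (eta A x) (eta A x)
        ltac:(rewrite eta_dim; lia) ltac:(rewrite eta_dim; lia) ltac:(auto)) as [_ [OK _]].
      exact (@R_chain (QO A) A (@xiG A) xiA Ra CondS Ra_dim Ra_src Ra_idc Ra_xi Ra_comp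
        (eta A x) (eta A x) x x (dim x) (Hu x) (Hu x) ltac:(intros i Hi; apply OK; auto)).
  - intros p x y Hc. unfold xiA at 1.
    assert (Hc' : composable p (eta A x) (eta A y)).
    { apply functor_composable; auto. apply (ofn_ax (eta A)). }
    rewrite of_comp by auto. rewrite (ex_comp QXP) by auto.
    destruct (@ex_ok (QO A) QP (oG A) (@xiG A) (S (dim (eta A x))) (ex_dim QXP) (ex_st0 QXP)
      ltac:(intros; apply QstS; auto) p (eta A x) (eta A y) Hc' ltac:(lia)) as [O1 [O2 O3]].
    apply (@R_exRHS (QO A) A (@xiG A) xiA Ra CondS Ra_dim Ra_src Ra_tgt Ra_idc Ra_xi Ra_comp
      p (eta A x) (eta A y) x y (Hu x) (Hu y)); auto.
  - intro u. unfold xiA.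
    transitivity (a (xiG (idc (eta A u)))). { f_equal. f_equal. apply (of_idc (eta A)). }
    transitivity (a (idc (xiG (eta A u)))). { f_equal. apply (ex_id QXP). }
    apply (of_idc a).
  - intro u. transitivity (a (xiG (xiG (eta A u)))). { symmetry. apply Hx. }
    transitivity (a (idc (xiG (eta A u)))). { f_equal. apply (ex_xi QXP). }
    apply (of_idc a).
  - transitivity (a (xiG (oG A))). { symmetry. apply Hx. }
    transitivity (a (idc (oG A))). { f_equal. apply (ex_o QXP). }
    apply (of_idc a).
Qed.

End Transfer.

Lemma counit_o (d : ExpCat) : counit d (origin (FQ (ecat d))) = origin d.
Proof. apply (efn_o (counit d)). Qed.
Lemma counit_xi_eta (d : ExpCat) x : counit d (xi (FQ (ecat d)) (eta (ecat d) x)) = xi d x.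
Proof. rewrite (efn_xi (counit d)). f_equal. apply counit_eta. Qed.

Theorem mainTheorem3 : monadic ForgetExp.
Proof.
  exists Fr, Adj. split; [|split].
  - intros d d' f g E. apply efun_eq. exact E.
  - intros d d' g Hg.
    assert (P : forall q, counit d' (Fmap g q) = g (counit d q)).
    { intro q. exact (f_equal (fun h : ofun (ecat (FQ (ecat d))) (ecat d') => ofn h q) Hg). }
    assert (Ho : g (origin d) = origin d').
    { transitivity (g (counit d (origin (FQ (ecat d))))). { f_equal; symmetry; apply counit_o. }
      rewrite <- P. transitivity (counit d' (origin (FQ (ecat d')))).
      { f_equal. apply (efn_o (Fmap g)). }
      apply counit_o. }
    assert (Hxi : forall x, g (xi d x) = xi d' (g x)).
    { intro x. transitivity (g (counit d (xi (FQ (ecat d)) (eta (ecat d) x)))).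
      { f_equal; symmetry; apply counit_xi_eta. }
      rewrite <- P. transitivity (counit d' (xi (FQ (ecat d')) (eta (ecat d') (g x)))).
      { f_equal. transitivity (xi (FQ (ecat d')) (Fmap g (eta (ecat d) x))).
        - apply (efn_xi (Fmap g)).
        - f_equal. apply Fmap_eta. }
      apply counit_xi_eta. }
    exists (@Build_efun d d' g Ho Hxi). reflexivity.
  - intros A a [Hal1 Hal2].
    assert (Hu : forall x, a (eta A x) = x).
    { intro x. exact (f_equal (fun h : ofun A A => ofn h x) Hal1). }
    assert (Hx : forall q, a (xiG q) = a (xiG (eta A (a q)))).
    { intro q. pose proof (f_equal (fun h : ofun (ecat (FQ (ecat (FQ A)))) A => ofn h (xi (FQ (QO A)) (eta (QO A) q))) Hal2) as E.
      change (a (Fmap a (xi (FQ (QO A)) (eta (QO A) q))) =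
              a (counit (FQ A) (xi (FQ (QO A)) (eta (QO A) q)))) in E.
      rewrite (efn_xi (Fmap a)), (efn_xi (counit (FQ A))) in E.
      rewrite Fmap_eta in E. rewrite (counit_eta (FQ A)) in E.
      symmetry. exact E. }
    set (d := {| ecat := A; origin := oA A a; xi := xiA A a; expax := A_exp A a Hu Hx |} : ExpCat).
    assert (Hxe : forall q, a (xi (FQ A) q) = xi d (a q)) by exact Hx.
    set (ae := @Build_efun (FQ A) d a eq_refl Hxe).
    exists d, (ofun_id A), (ofun_id A).
    split; [apply ofun_eq; reflexivity|split; [apply ofun_eq; reflexivity|split]].
    + assert (Eq : efun_comp ae (Fmap (ofun_id A)) = counit d).
      { apply (efun_agree A d). intro x. transitivity x.
        - change (a (Fmap (ofun_id A) (eta A x)) = x). rewrite Fmap_eta. apply Hu.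
        - symmetry; apply (counit_eta d). }
      apply ofun_eq; intro q. exact (f_equal (fun e : efun (FQ A) d => ofn (efn e) q) Eq).
    + assert (Eq : efun_comp (counit d) (Fmap (ofun_id A)) = ae).
      { apply (efun_agree A d). intro x. transitivity x.
        - change (counit d (Fmap (ofun_id A) (eta A x)) = x). rewrite Fmap_eta. apply (counit_eta d).
        - symmetry; apply Hu. }
      apply ofun_eq; intro q. exact (f_equal (fun e : efun (FQ A) d => ofn (efn e) q) Eq).
Qed.
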